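(* The equivalence groupoid of the class $\bar{\mathcal L}_0$ consists of the triples $(\bar\theta,\varphi,\tilde{\bar\theta})$ such that $\varphi$ has components \[ \tilde t=T,\quad \tilde x=T_tU^1x+X^0,\quad \tilde u=U^1u-U^1_tx+U^{00},\qquad\text{with } U^1=c_1Y^1+c_0,\ U^{00}=c_2-c_1Y^2, \] the tuples are related by \[ \tilde A^2=(U^1)^2T_tA^2,\quad \tilde A^{11}=\frac1{T_t}\left(A^{11}-\frac{T_{tt}}{T_t}-\frac{2U^1_t}{U^1}\right),\quad \tilde A^{10}=U^1A^{10}-\frac{X^0_t}{T_t}+U^{00}-\frac{X^0}{T_t}\left(A^{11}-\frac{T_{tt}}{T_t}-\frac{2U^1_t}{U^1}\right), \] \[ \tilde Y^0=Y^0+\ln\frac{\delta}{T_t(c_1Y^1+c_0)^2},\quad \tilde Y^1=\frac{c_1'Y^1+c_0'}{c_1Y^1+c_0},\quad \tilde Y^2=\frac{\delta Y^2}{c_1Y^1+c_0}-\frac{\delta X^0{\rm e}^{Y^0}}{T_t(c_1Y^1+c_0)^2}-c_2\frac{c_1'Y^1+c_0'}{c_1Y^1+c_0}+c_3, \] where $\delta=c_1'c_0-c_1c_0'$, $T$ and $X^0$ are arbitrary smooth functions of $t$, and $c_0,c_1,c_2,c_3,c_0',c_1'$ are arbitrary constants with $\delta T_t>0$.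
   Context: All functions are smooth. $\bar{\mathcal L}_0$ is the class of equations $u_t+uu_x=A^2(t,x)u_{xx}+\big(A^{11}(t)x+A^{10}(t)\big)u_x$ for $u(t,x)$ parameterized by the extended arbitrary-element tuple $\bar\theta=(A^{10},A^{11},A^2,Y^0,Y^1,Y^2)$, where $A^2$ is a smooth nonvanishing function of $(t,x)$, and $A^{10},A^{11},Y^0,Y^1,Y^2$ are smooth functions of $t$ only satisfying $Y^0_t=A^{11}$, $Y^1_t={\rm e}^{Y^0}$, $Y^2_t=A^{10}{\rm e}^{Y^0}$ (superscripts are indices, not exponents). The equivalence groupoid is the set of admissible transformations: triples (source tuple, point transformation in $(t,x,u)$, target tuple) such that the point transformation maps the source equation to the target equation, both in the class. In the relations, left-hand sides are evaluated at the new variables and right-hand sides at the old ones. *)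

(* Defs.v *)
From Stdlib Require Import Reals.
From Coquelicot Require Import Coquelicot.
Open Scope R_scope.

Definition smooth1 (f : R -> R) : Prop := forall (n : nat) (t : R), ex_derive_n f n t.

Definition pd2_1 (f : R -> R -> R) : R -> R -> R := fun t x => Derive (fun s => f s x) t.
Definition pd2_2 (f : R -> R -> R) : R -> R -> R := fun t x => Derive (fun s => f t s) x.

Fixpoint C2n (n : nat) (f : R -> R -> R) : Prop :=
  match n with
  | O => forall t x, continuous (fun p : R * R => f (fst p) (snd p)) (t, x)
  | S m => (forall t x, ex_derive (fun s => f s x) t /\ ex_derive (fun s => f t s) x)
           /\ C2n m (pd2_1 f) /\ C2n m (pd2_2 f)
  end.
Definition smooth2 (f : R -> R -> R) : Prop := forall n, C2n n f.

Definition pd3_1 (f : R -> R -> R -> R) : R -> R -> R -> R :=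
  fun t x u => Derive (fun s => f s x u) t.
Definition pd3_2 (f : R -> R -> R -> R) : R -> R -> R -> R :=
  fun t x u => Derive (fun s => f t s u) x.
Definition pd3_3 (f : R -> R -> R -> R) : R -> R -> R -> R :=
  fun t x u => Derive (fun s => f t x s) u.

Fixpoint C3n (n : nat) (f : R -> R -> R -> R) : Prop :=
  match n with
  | O => forall t x u,
      continuous (fun p : R * R * R => f (fst (fst p)) (snd (fst p)) (snd p)) (t, x, u)
  | S m => (forall t x u, ex_derive (fun s => f s x u) t /\ ex_derive (fun s => f t s u) x
                          /\ ex_derive (fun s => f t x s) u)
           /\ C3n m (pd3_1 f) /\ C3n m (pd3_2 f) /\ C3n m (pd3_3 f)
  end.
Definition smooth3 (f : R -> R -> R -> R) : Prop := forall n, C3n n f.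

Record tuple := mkTuple {
  A10 : R -> R;
  A11 : R -> R;
  A2  : R -> R -> R;
  Y0  : R -> R;
  Y1  : R -> R;
  Y2  : R -> R }.

Definition in_class (th : tuple) : Prop :=
  smooth1 (A10 th) /\ smooth1 (A11 th) /\ smooth2 (A2 th) /\
  smooth1 (Y0 th) /\ smooth1 (Y1 th) /\ smooth1 (Y2 th) /\
  (forall t x, A2 th t x <> 0) /\
  (forall t, Derive (Y0 th) t = A11 th t) /\
  (forall t, Derive (Y1 th) t = exp (Y0 th t)) /\
  (forall t, Derive (Y2 th) t = A10 th t * exp (Y0 th t)).

Record ptrans := mkPtrans {
  PT : R -> R -> R -> R;
  PX : R -> R -> R -> R;
  PU : R -> R -> R -> R }.

Definition jacobian (phi : ptrans) (t x u : R) : R :=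
  let a11 := pd3_1 (PT phi) t x u in let a12 := pd3_2 (PT phi) t x u in
  let a13 := pd3_3 (PT phi) t x u in
  let a21 := pd3_1 (PX phi) t x u in let a22 := pd3_2 (PX phi) t x u in
  let a23 := pd3_3 (PX phi) t x u in
  let a31 := pd3_1 (PU phi) t x u in let a32 := pd3_2 (PU phi) t x u in
  let a33 := pd3_3 (PU phi) t x u in
  a11 * (a22 * a33 - a23 * a32) - a12 * (a21 * a33 - a23 * a31)
  + a13 * (a21 * a32 - a22 * a31).

Definition point_transf (phi : ptrans) : Prop :=
  smooth3 (PT phi) /\ smooth3 (PX phi) /\ smooth3 (PU phi) /\
  (forall t x u, jacobian phi t x u <> 0).

Definition Dt0 (F : R -> R -> R -> R) (t x u ut : R) : R :=
  pd3_1 F t x u + ut * pd3_3 F t x u.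
Definition Dx0 (F : R -> R -> R -> R) (t x u ux : R) : R :=
  pd3_2 F t x u + ux * pd3_3 F t x u.

Definition pdet (phi : ptrans) (t x u ut ux : R) : R :=
  Dt0 (PT phi) t x u ut * Dx0 (PX phi) t x u ux
  - Dt0 (PX phi) t x u ut * Dx0 (PT phi) t x u ux.

Definition new_ut (phi : ptrans) (t x u ut ux : R) : R :=
  (Dt0 (PU phi) t x u ut * Dx0 (PX phi) t x u ux
   - Dt0 (PX phi) t x u ut * Dx0 (PU phi) t x u ux) / pdet phi t x u ut ux.
Definition new_ux (phi : ptrans) (t x u ut ux : R) : R :=
  (Dt0 (PT phi) t x u ut * Dx0 (PU phi) t x u ux
   - Dx0 (PT phi) t x u ux * Dt0 (PU phi) t x u ut) / pdet phi t x u ut ux.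

Definition Dt1 (H : R -> R -> R -> R -> R -> R) (t x u ut ux utt utx : R) : R :=
  Derive (fun s => H s x u ut ux) t + ut * Derive (fun s => H t x s ut ux) u
  + utt * Derive (fun s => H t x u s ux) ut + utx * Derive (fun s => H t x u ut s) ux.
Definition Dx1 (H : R -> R -> R -> R -> R -> R) (t x u ut ux utx uxx : R) : R :=
  Derive (fun s => H t s u ut ux) x + ux * Derive (fun s => H t x s ut ux) u
  + utx * Derive (fun s => H t x u s ux) ut + uxx * Derive (fun s => H t x u ut s) ux.

Definition new_uxx (phi : ptrans) (t x u ut ux utt utx uxx : R) : R :=
  (Dt0 (PT phi) t x u ut * Dx1 (new_ux phi) t x u ut ux utx uxx
   - Dx0 (PT phi) t x u ux * Dt1 (new_ux phi) t x u ut ux utt utx)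
  / pdet phi t x u ut ux.

Definition eqL (th : tuple) (t x u ut ux uxx : R) : R :=
  ut + u * ux - A2 th t x * uxx - (A11 th t * x + A10 th t) * ux.

(* phi maps L_theta to L_theta~ : the second prolongation of phi sends every
   point of the equation manifold of L_theta (in J^2, where the prolongation
   is defined) to a point of the equation manifold of L_theta~. *)
Definition maps_eq (th : tuple) (phi : ptrans) (th' : tuple) : Prop :=
  forall t x u ut ux utt utx uxx,
    pdet phi t x u ut ux <> 0 ->
    eqL th t x u ut ux uxx = 0 ->
    eqL th' (PT phi t x u) (PX phi t x u) (PU phi t x u)
        (new_ut phi t x u ut ux) (new_ux phi t x u ut ux)
        (new_uxx phi t x u ut ux utt utx uxx) = 0.

Definition admissible (th : tuple) (phi : ptrans) (th' : tuple) : Prop :=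
  in_class th /\ in_class th' /\ point_transf phi /\ maps_eq th phi th'.

(* Main.v *)
Require Import Defs.
From Stdlib Require Import Reals Lra Lia FunctionalExtensionality.
From Coquelicot Require Import Coquelicot.
Open Scope R_scope.

Lemma cont_pt_of_ex (f : R -> R) (x : R) : ex_derive f x -> continuity_pt f x.
Proof. intro H. apply continuity_pt_filterlim. apply (ex_derive_continuous (V:=R_NormedModule)); exact H. Qed.

Lemma deriv0_const (f : R -> R) : (forall x, is_derive f x 0) -> forall a b, f a = f b.
Proof.
  intros H a b.
  destruct (MVT_gen f a b (fun _ => 0)) as [c [_ Hc]].
  - intros; apply H.
  - intros; apply cont_pt_of_ex; eexists; apply H.
  - lra.
Qed.

Lemma deriv0_const' (f : R -> R) : (forall x, ex_derive f x) -> (forall x, Derive f x = 0) ->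
  forall a b, f a = f b.
Proof.
  intros H1 H2. apply deriv0_const. intro x. rewrite <- (H2 x). now apply Derive_correct.
Qed.

Lemma smooth1_ex (f : R -> R) t : smooth1 f -> ex_derive f t.
Proof. intro H. exact (H 1%nat t). Qed.

Lemma Dn_S f n t : Derive_n (Derive f) n t = Derive_n f (S n) t.
Proof.
  transitivity (Derive_n (Derive_n f 1) n t).
  apply Derive_n_ext; intro; reflexivity.
  rewrite Derive_n_comp. replace (n + 1)%nat with (S n) by lia. reflexivity.
Qed.

Lemma exn_S f n t : ex_derive_n (Derive f) (S n) t <-> ex_derive_n f (S (S n)) t.
Proof.
  change (ex_derive (Derive_n (Derive f) n) t <-> ex_derive (Derive_n f (S n)) t).
  split; apply ex_derive_ext; intro s.
  - rewrite Dn_S. reflexivity.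
  - rewrite Dn_S. reflexivity.
Qed.

Lemma smooth1_D f : smooth1 f -> smooth1 (Derive f).
Proof.
  intros H n t. destruct n. exact I. apply (proj2 (exn_S f n t)). exact (H (S (S n)) t).
Qed.

Lemma smooth1_char f : smooth1 f <-> (forall t, ex_derive f t) /\ smooth1 (Derive f).
Proof.
  split.
  - intro H; split; [intro; now apply smooth1_ex | now apply smooth1_D].
  - intros [H1 H2] n t. destruct n. exact I. destruct n. exact (H1 t).
    apply (proj1 (exn_S f n t)). exact (H2 (S n) t).
Qed.

Definition upto (n : nat) (f : R -> R) := forall k t, (k <= n)%nat -> ex_derive_n f k t.

Lemma upto_S n f : upto (S n) f <-> (forall t, ex_derive f t) /\ upto n (Derive f).
Proof.
  split.
  - intro H. split. intro t. exact (H 1%nat t ltac:(lia)).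
    intros k t Hk. destruct k. exact I. apply (proj2 (exn_S f k t)). apply H. lia.
  - intros [H1 H2] k t Hk. destruct k. exact I. destruct k. exact (H1 t).
    apply (proj1 (exn_S f k t)). apply H2. lia.
Qed.

Lemma smooth1_upto f : smooth1 f <-> forall n, upto n f.
Proof.
  split. intros H n k t _. apply H. intros H n t. apply (H n). lia.
Qed.

Lemma upto_le n f : upto (S n) f -> upto n f.
Proof. intros H k t Hk. apply H. lia. Qed.

Lemma upto_plus_mult n : forall f g, upto n f -> upto n g ->
  upto n (fun t => f t + g t) /\ upto n (fun t => f t * g t).
Proof.
  induction n; intros f g Hf Hg.
  - split; intros k t Hk; replace k with 0%nat by lia; exact I.
  - pose proof (upto_le n f Hf) as Hf3. pose proof (upto_le n g Hg) as Hg3.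
    apply upto_S in Hf as [Hf1 Hf2]. apply upto_S in Hg as [Hg1 Hg2].
    split; apply upto_S; split.
    + intro t. apply (ex_derive_plus f g t (Hf1 t) (Hg1 t)).
    + replace (Derive (fun t => f t + g t)) with (fun t => Derive f t + Derive g t).
      exact (proj1 (IHn _ _ Hf2 Hg2)).
      apply functional_extensionality; intro t. rewrite (Derive_plus f g t (Hf1 t) (Hg1 t)). reflexivity.
    + intro t. apply (ex_derive_mult f g t (Hf1 t) (Hg1 t)).
    + replace (Derive (fun t => f t * g t)) with (fun t => Derive f t * g t + f t * Derive g t).
      exact (proj1 (IHn _ _ (proj2 (IHn _ _ Hf2 Hg3)) (proj2 (IHn _ _ Hf3 Hg2)))).
      apply functional_extensionality; intro t. rewrite (Derive_mult f g t (Hf1 t) (Hg1 t)). reflexivity.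
Qed.

Lemma smooth1_plus f g : smooth1 f -> smooth1 g -> smooth1 (fun t => f t + g t).
Proof. rewrite !smooth1_upto. intros Hf Hg n. exact (proj1 (upto_plus_mult n f g (Hf n) (Hg n))). Qed.
Lemma smooth1_mult f g : smooth1 f -> smooth1 g -> smooth1 (fun t => f t * g t).
Proof. rewrite !smooth1_upto. intros Hf Hg n. exact (proj2 (upto_plus_mult n f g (Hf n) (Hg n))). Qed.
Lemma smooth1_const c : smooth1 (fun _ => c).
Proof.
  apply smooth1_upto. induction n.
  - intros k t Hk; replace k with 0%nat by lia; exact I.
  - apply upto_S. split. intro; apply ex_derive_const.
    replace (Derive (fun _ : R => c)) with (fun _ : R => 0). 
    2:{ apply functional_extensionality; intro t. rewrite Derive_const. reflexivity. }
    clear IHn. induction n.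
    + intros k t Hk; replace k with 0%nat by lia; exact I.
    + apply upto_S. split. intro; apply ex_derive_const.
      replace (Derive (fun _ : R => 0)) with (fun _ : R => 0). exact IHn.
      apply functional_extensionality; intro t. rewrite Derive_const. reflexivity.
Qed.

Lemma sm3_ex f t x u : smooth3 f ->
  ex_derive (fun s => f s x u) t /\ ex_derive (fun s => f t s u) x /\ ex_derive (fun s => f t x s) u.
Proof. intro H. exact (proj1 (H 1%nat) t x u). Qed.
Lemma sm3_1 f : smooth3 f -> smooth3 (pd3_1 f).
Proof. intros H n. exact (proj1 (proj2 (H (S n)))). Qed.
Lemma sm3_2 f : smooth3 f -> smooth3 (pd3_2 f).
Proof. intros H n. exact (proj1 (proj2 (proj2 (H (S n))))). Qed.
Lemma sm3_3 f : smooth3 f -> smooth3 (pd3_3 f).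
Proof. intros H n. exact (proj2 (proj2 (proj2 (H (S n))))). Qed.
Lemma sm3_ex1 f t x u : smooth3 f -> ex_derive (fun s => f s x u) t.
Proof. intro H. exact (proj1 (sm3_ex f t x u H)). Qed.
Lemma sm3_ex2 f t x u : smooth3 f -> ex_derive (fun s => f t s u) x.
Proof. intro H. exact (proj1 (proj2 (sm3_ex f t x u H))). Qed.
Lemma sm3_ex3 f t x u : smooth3 f -> ex_derive (fun s => f t x s) u.
Proof. intro H. exact (proj2 (proj2 (sm3_ex f t x u H))). Qed.

Lemma sm3_slice1 f x u : smooth3 f -> smooth1 (fun t => f t x u).
Proof.
  intro H. apply smooth1_upto. intro n. revert f H. induction n; intros f H.
  - intros k t Hk; replace k with 0%nat by lia; exact I.
  - apply upto_S. split. intro t. exact (sm3_ex1 f t x u H).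
    change (upto n (fun t => pd3_1 f t x u)). apply IHn. now apply sm3_1.
Qed.
Lemma sm3_slice2 f t u : smooth3 f -> smooth1 (fun x => f t x u).
Proof.
  intro H. apply smooth1_upto. intro n. revert f H. induction n; intros f H.
  - intros k s Hk; replace k with 0%nat by lia; exact I.
  - apply upto_S. split. intro x. exact (sm3_ex2 f t x u H).
    change (upto n (fun x => pd3_2 f t x u)). apply IHn. now apply sm3_2.
Qed.
Lemma sm3_slice3 f t x : smooth3 f -> smooth1 (fun u => f t x u).
Proof.
  intro H. apply smooth1_upto. intro n. revert f H. induction n; intros f H.
  - intros k s Hk; replace k with 0%nat by lia; exact I.
  - apply upto_S. split. intro u. exact (sm3_ex3 f t x u H).
    change (upto n (fun u => pd3_3 f t x u)). apply IHn. now apply sm3_3.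
Qed.

Lemma continuous_id' (x : R * R) : continuous (fun p : R * R => p) x.
Proof. intros P HP. exact HP. Qed.

Lemma sm3_slice12 f u : smooth3 f -> smooth2 (fun t x => f t x u).
Proof.
  intros H n. revert f H. induction n; intros f H.
  - intros t x. simpl.
    apply (continuous_comp_2 (fun p : R * R => p) (fun _ => u)
             (fun q (v : R) => f (fst q) (snd q) v) (t, x)).
    apply continuous_id'. apply continuous_const.
    exact (H 0%nat t x u).
  - split. intros t x. split. exact (sm3_ex1 f t x u H). exact (sm3_ex2 f t x u H).
    split.
    + change (C2n n (fun t x => pd3_1 f t x u)). apply IHn. now apply sm3_1.
    + change (C2n n (fun t x => pd3_2 f t x u)). apply IHn. now apply sm3_2.
Qed.

Lemma sm2_ex f t x : smooth2 f -> ex_derive (fun s => f s x) t /\ ex_derive (fun s => f t s) x.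
Proof. intro H. exact (proj1 (H 1%nat) t x). Qed.
Lemma sm2_1 f : smooth2 f -> smooth2 (pd2_1 f).
Proof. intros H n. exact (proj1 (proj2 (H (S n)))). Qed.
Lemma sm2_2 f : smooth2 f -> smooth2 (pd2_2 f).
Proof. intros H n. exact (proj2 (proj2 (H (S n)))). Qed.
Lemma sm2_ex1 f t x : smooth2 f -> ex_derive (fun s => f s x) t.
Proof. intro H. exact (proj1 (sm2_ex f t x H)). Qed.
Lemma sm2_ex2 f t x : smooth2 f -> ex_derive (fun s => f t s) x.
Proof. intro H. exact (proj2 (sm2_ex f t x H)). Qed.
Lemma sm2_slice1 f x : smooth2 f -> smooth1 (fun t => f t x).
Proof.
  intro H. apply smooth1_upto. intro n. revert f H. induction n; intros f H.
  - intros k t Hk; replace k with 0%nat by lia; exact I.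
  - apply upto_S. split. intro t. exact (sm2_ex1 f t x H).
    change (upto n (fun t => pd2_1 f t x)). apply IHn. now apply sm2_1.
Qed.

Ltac etared := repeat match goal with |- context [fun x0 : R => ?f x0] => progress change (fun x0 : R => f x0) with f end.
Ltac ad := auto_derive; repeat split; auto; etared; try ring; try (unfold Rminus; ring).

Definition aff (a b c : R -> R) := fun t x u => a t + b t * x + c t * u.

Lemma pd_aff1 (a b c : R -> R) t x u : ex_derive a t -> ex_derive b t -> ex_derive c t ->
  pd3_1 (aff a b c) t x u = Derive a t + Derive b t * x + Derive c t * u.
Proof.
  intros Ha Hb Hc. unfold pd3_1, aff. apply is_derive_unique. ad.
Qed.
Lemma pd_aff2 a b c t x u : pd3_2 (aff a b c) t x u = b t.
Proof. unfold pd3_2, aff. apply is_derive_unique. ad. Qed.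
Lemma pd_aff3 a b c t x u : pd3_3 (aff a b c) t x u = c t.
Proof. unfold pd3_3, aff. apply is_derive_unique. ad. Qed.

Lemma cont_fstfst (a : R -> R) (p : R * R * R) : ex_derive a (fst (fst p)) ->
  continuous (fun q : R * R * R => a (fst (fst q))) p.
Proof.
  destruct p as [[t x] u]. intro H.
  apply (continuous_comp (fun q : R*R*R => fst (fst q)) a).
  apply (continuous_comp (fun q : R*R*R => fst q) (fun q : R * R => fst q)).
  apply continuous_fst. apply continuous_fst.
  apply (ex_derive_continuous (V:=R_NormedModule)). exact H.
Qed.

Lemma sm3_aff : forall a b c, smooth1 a -> smooth1 b -> smooth1 c -> smooth3 (aff a b c).
Proof.
  intros a b c Ha Hb Hc n. revert a b c Ha Hb Hc. induction n; intros a b c Ha Hb Hc.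
  - intros t x u. unfold aff. simpl.
    apply (continuous_plus (fun q : R*R*R => a (fst (fst q)) + b (fst (fst q)) * snd (fst q))
                           (fun q : R*R*R => c (fst (fst q)) * snd q)).
    apply (continuous_plus (fun q : R*R*R => a (fst (fst q)))
                           (fun q : R*R*R => b (fst (fst q)) * snd (fst q))).
    apply cont_fstfst. now apply smooth1_ex.
    apply (continuous_mult (fun q : R*R*R => b (fst (fst q))) (fun q : R*R*R => snd (fst q))).
    apply cont_fstfst. now apply smooth1_ex.
    apply (continuous_comp (fun q : R*R*R => fst q) (fun q : R * R => snd q)).
    apply continuous_fst. apply continuous_snd.
    apply (continuous_mult (fun q : R*R*R => c (fst (fst q))) (fun q : R*R*R => snd q)).
    apply cont_fstfst. now apply smooth1_ex.
    apply continuous_snd.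
  - pose proof (fun t => smooth1_ex a t Ha) as Ha1.
    pose proof (fun t => smooth1_ex b t Hb) as Hb1.
    pose proof (fun t => smooth1_ex c t Hc) as Hc1.
    split; [|split; [|split]].
    + intros t x u. unfold aff. repeat split.
      * eexists; ad.
      * eexists; ad.
      * eexists; ad.
    + replace (pd3_1 (aff a b c)) with (aff (Derive a) (Derive b) (Derive c)).
      apply IHn; now apply smooth1_D.
      apply functional_extensionality; intro t. apply functional_extensionality; intro x.
      apply functional_extensionality; intro u. rewrite pd_aff1; auto.
    + replace (pd3_2 (aff a b c)) with (aff b (fun _ => 0) (fun _ => 0)).
      apply IHn; auto; apply smooth1_const.
      apply functional_extensionality; intro t. apply functional_extensionality; intro x.
      apply functional_extensionality; intro u. rewrite pd_aff2. unfold aff. ring.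
    + replace (pd3_3 (aff a b c)) with (aff c (fun _ => 0) (fun _ => 0)).
      apply IHn; auto; apply smooth1_const.
      apply functional_extensionality; intro t. apply functional_extensionality; intro x.
      apply functional_extensionality; intro u. rewrite pd_aff3. unfold aff. ring.
Qed.

Lemma cont_contra (F : R -> R) t0 : ex_derive F t0 -> (forall t, t <> t0 -> F t = 0) -> F t0 = 0.
Proof.
  intros HF HZ. apply cont_pt_of_ex in HF.
  destruct (Req_dec (F t0) 0) as [E|E]; auto. exfalso.
  destruct (HF (Rabs (F t0)) (Rabs_pos_lt _ E)) as [alp [Halp H2]].
  specialize (H2 (t0 + alp/2)). simpl in H2. unfold R_dist, D_x, no_cond in H2.
  rewrite HZ in H2 by lra.
  replace (0 - F t0) with (- F t0) in H2 by ring. rewrite Rabs_Ropp in H2.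
  assert (Rabs (F t0) < Rabs (F t0)); [|lra].
  apply H2. split. split. exact I. lra. replace (t0 + alp/2 - t0) with (alp/2) by ring.
  rewrite Rabs_right; lra.
Qed.

Lemma Y1_inj th : in_class th -> forall a b, Y1 th a = Y1 th b -> a = b.
Proof.
  intros Hc a b E. destruct Hc as (_&_&_&HY0&HY1&_&_&_&HdY1&_).
  destruct (Req_dec a b) as [|N]; auto. exfalso.
  destruct (MVT_gen (Y1 th) a b (fun s => exp (Y0 th s))) as [c [_ Hc]].
  - intros s _. rewrite <- HdY1. apply Derive_correct. now apply smooth1_ex.
  - intros s _. apply cont_pt_of_ex. now apply smooth1_ex.
  - rewrite E in Hc. replace (Y1 th b - Y1 th b) with 0 in Hc by ring.
    symmetry in Hc. apply Rmult_integral in Hc as [Hc|Hc].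
    pose proof (exp_pos (Y0 th c)); lra. apply N; lra.
Qed.

Lemma U1_nz th th' (T : R -> R) c0 c1 c0' c1' :
  in_class th -> in_class th' -> smooth1 T ->
  (forall t, (c1' * c0 - c1 * c0') * Derive T t > 0) ->
  (forall t, Y1 th' (T t) = (c1' * Y1 th t + c0') / (c1 * Y1 th t + c0)) ->
  forall t, c1 * Y1 th t + c0 <> 0.
Proof.
  intros Hc Hc' HT Hd HY t0 E0.
  assert (Hdl : c1' * c0 - c1 * c0' <> 0).
  { intro E. specialize (Hd 0). rewrite E in Hd. lra. }
  destruct (Req_dec c1 0) as [E1|E1].
  { subst c1. apply Hdl. replace c0 with 0 by lra. ring. }
  assert (HN : c1' * Y1 th t0 + c0' <> 0).
  { intro E. apply Hdl. replace c0 with (- c1 * Y1 th t0) by lra.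
    replace c0' with (- c1' * Y1 th t0) by lra. ring. }
  set (F := fun t => Y1 th' (T t) * (c1 * Y1 th t + c0) - (c1' * Y1 th t + c0')).
  assert (HF : F t0 = 0).
  { apply cont_contra.
    - unfold F. destruct Hc as (_&_&_&_&HY1&_). destruct Hc' as (_&_&_&_&HY1'&_).
      auto_derive. repeat split; apply smooth1_ex; auto.
    - intros t Ht. unfold F. rewrite HY. field.
      intro E. apply Ht. apply (Y1_inj th Hc). apply Rmult_eq_reg_l with c1; auto. lra. }
  unfold F in HF. rewrite E0 in HF. apply HN. lra.
Qed.

Lemma reverse th phi th' (T X0 : R -> R) (c0 c1 c2 c3 c0' c1' : R) :
  in_class th -> in_class th' -> smooth1 T -> smooth1 X0 ->
  (forall t, (c1' * c0 - c1 * c0') * Derive T t > 0) ->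
  (forall t x u, PT phi t x u = T t /\
     PX phi t x u = Derive T t * (c1 * Y1 th t + c0) * x + X0 t /\
     PU phi t x u = (c1 * Y1 th t + c0) * u - Derive (fun t => c1 * Y1 th t + c0) t * x
                    + (c2 - c1 * Y2 th t)) ->
  (forall t x, A2 th' (T t) (Derive T t * (c1 * Y1 th t + c0) * x + X0 t)
               = (c1 * Y1 th t + c0) ^ 2 * Derive T t * A2 th t x) ->
  (forall t, A11 th' (T t) = / Derive T t * (A11 th t - Derive (Derive T) t / Derive T t
                   - 2 * Derive (fun t => c1 * Y1 th t + c0) t / (c1 * Y1 th t + c0))) ->
  (forall t, A10 th' (T t) = (c1 * Y1 th t + c0) * A10 th t - Derive X0 t / Derive T t
                   + (c2 - c1 * Y2 th t)
                   - X0 t / Derive T t * (A11 th t - Derive (Derive T) t / Derive T t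
                   - 2 * Derive (fun t => c1 * Y1 th t + c0) t / (c1 * Y1 th t + c0))) ->
  (forall t, Y1 th' (T t) = (c1' * Y1 th t + c0') / (c1 * Y1 th t + c0)) ->
  point_transf phi /\ maps_eq th phi th'.
Proof.
  intros Hc Hc' HT HX0 Hd Hphi HA2 HA11 HA10 HY1'.
  pose proof (U1_nz th th' T c0 c1 c0' c1' Hc Hc' HT Hd HY1') as Hnz.
  assert (HTt : forall t, Derive T t <> 0).
  { intros t E. specialize (Hd t). rewrite E in Hd. lra. }
  pose proof Hc as (HsA10&HsA11&HsA2&HsY0&HsY1&HsY2&HA2nz&HdY0&HdY1&HdY2).
  set (U1 := fun t => c1 * Y1 th t + c0).
  assert (HnzU : forall t, U1 t <> 0) by exact Hnz.
  assert (HU1t : forall t, Derive U1 t = c1 * exp (Y0 th t)).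
  { intro t. rewrite <- HdY1. unfold U1. apply is_derive_unique. auto_derive.
    apply smooth1_ex; auto. etared. ring. }
  assert (HU1tt : forall t, Derive (Derive U1) t = c1 * exp (Y0 th t) * A11 th t).
  { intro t. rewrite (Derive_ext _ _ t HU1t). rewrite <- HdY0.
    apply is_derive_unique. auto_derive. apply smooth1_ex; auto. etared. ring. }
  assert (HU00 : forall t, Derive (fun t => c2 - c1 * Y2 th t) t = - (c1 * (A10 th t * exp (Y0 th t)))).
  { intro t. rewrite <- HdY2. apply is_derive_unique. auto_derive. apply smooth1_ex; auto. etared. ring. }
  assert (HsU1 : smooth1 U1).
  { apply smooth1_plus. apply smooth1_mult. apply smooth1_const. auto. apply smooth1_const. }
  assert (HP : forall t, Derive (fun t => Derive T t * U1 t) t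
                 = Derive (Derive T) t * U1 t + Derive T t * (c1 * exp (Y0 th t))).
  { intro t. rewrite Derive_mult. rewrite HU1t. reflexivity.
    apply smooth1_ex, smooth1_D; auto. apply smooth1_ex; auto. }
  set (P := fun t => Derive T t * U1 t).
  set (U1t := fun t => - Derive U1 t).
  set (U00 := fun t => c2 - c1 * Y2 th t).
  assert (EPT : PT phi = aff T (fun _ => 0) (fun _ => 0)).
  { apply functional_extensionality; intro t. apply functional_extensionality; intro x.
    apply functional_extensionality; intro u. rewrite (proj1 (Hphi t x u)). unfold aff. ring. }
  assert (EPX : PX phi = aff X0 P (fun _ => 0)).
  { apply functional_extensionality; intro t. apply functional_extensionality; intro x.
    apply functional_extensionality; intro u. rewrite (proj1 (proj2 (Hphi t x u))). unfold aff, P, U1. ring. }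
  assert (EPU : PU phi = aff U00 U1t U1).
  { apply functional_extensionality; intro t. apply functional_extensionality; intro x.
    apply functional_extensionality; intro u. rewrite (proj2 (proj2 (Hphi t x u))). unfold aff, U00, U1t, U1. ring. }
  assert (HsP : smooth1 P). { apply smooth1_mult; auto. apply smooth1_D; auto. }
  assert (HsU1t : smooth1 U1t).
  { replace U1t with (fun t => (-1) * Derive U1 t).
    apply smooth1_mult. apply smooth1_const. apply smooth1_D; auto.
    apply functional_extensionality; intro t. unfold U1t. ring. }
  assert (HsU00 : smooth1 U00).
  { apply smooth1_plus. apply smooth1_const. replace (fun t => - (c1 * Y2 th t)) with (fun t => (- c1) * Y2 th t).
    apply smooth1_mult; auto. apply smooth1_const.
    apply functional_extensionality; intro t. ring. }
  assert (PT1 : forall t x u, pd3_1 (PT phi) t x u = Derive T t).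
  { intros. rewrite EPT, pd_aff1. rewrite !Derive_const. ring.
    apply smooth1_ex; auto. apply ex_derive_const. apply ex_derive_const. }
  assert (PT2 : forall t x u, pd3_2 (PT phi) t x u = 0).
  { intros. rewrite EPT, pd_aff2. reflexivity. }
  assert (PT3 : forall t x u, pd3_3 (PT phi) t x u = 0).
  { intros. rewrite EPT, pd_aff3. reflexivity. }
  assert (PX1 : forall t x u, pd3_1 (PX phi) t x u = Derive X0 t + (Derive (Derive T) t * U1 t + Derive T t * (c1 * exp (Y0 th t))) * x).
  { intros. rewrite EPX, pd_aff1. rewrite Derive_const. unfold P. rewrite HP. ring.
    apply smooth1_ex; auto. apply smooth1_ex; auto. apply ex_derive_const. }
  assert (PX2 : forall t x u, pd3_2 (PX phi) t x u = Derive T t * U1 t).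
  { intros. rewrite EPX, pd_aff2. reflexivity. }
  assert (PX3 : forall t x u, pd3_3 (PX phi) t x u = 0).
  { intros. rewrite EPX, pd_aff3. reflexivity. }
  assert (PU1 : forall t x u, pd3_1 (PU phi) t x u = - c1 * A10 th t * exp (Y0 th t) - c1 * exp (Y0 th t) * A11 th t * x + c1 * exp (Y0 th t) * u).
  { intros. rewrite EPU, pd_aff1. unfold U00, U1t. rewrite HU00.
    replace (Derive (fun t0 => - Derive U1 t0) t) with (- Derive (Derive U1) t).
    rewrite HU1tt, HU1t. ring.
    rewrite Derive_opp. reflexivity.
    apply smooth1_ex; auto. apply smooth1_ex; auto. apply smooth1_ex; auto. }
  assert (PU2 : forall t x u, pd3_2 (PU phi) t x u = - (c1 * exp (Y0 th t))).
  { intros. rewrite EPU, pd_aff2. unfold U1t. rewrite HU1t. reflexivity. }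
  assert (PU3 : forall t x u, pd3_3 (PU phi) t x u = U1 t).
  { intros. rewrite EPU, pd_aff3. reflexivity. }
  split.
  - split; [|split; [|split]].
    + rewrite EPT. apply sm3_aff; auto; apply smooth1_const.
    + rewrite EPX. apply sm3_aff; auto; apply smooth1_const.
    + rewrite EPU. apply sm3_aff; auto.
    + intros t x u. unfold jacobian. rewrite PT1, PT2, PT3, PX1, PX2, PX3, PU1, PU2, PU3.
      replace (Derive T t * (Derive T t * U1 t * U1 t - 0 * - (c1 * exp (Y0 th t))) - 0 * ((Derive X0 t +
         (Derive (Derive T) t * U1 t + Derive T t * (c1 * exp (Y0 th t))) * x) * U1 t - 0 *
        (- c1 * A10 th t * exp (Y0 th t) - c1 * exp (Y0 th t) * A11 th t * x + c1 * exp (Y0 th t) * u)) +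
        0 * ((Derive X0 t + (Derive (Derive T) t * U1 t + Derive T t * (c1 * exp (Y0 th t))) * x) *
        - (c1 * exp (Y0 th t)) - Derive T t * U1 t * (- c1 * A10 th t * exp (Y0 th t) - c1 * exp (Y0 th t) * A11 th t * x + c1 * exp (Y0 th t) * u)))
      with ((Derive T t * U1 t) ^ 2) by ring.
      apply pow_nonzero. apply Rmult_integral_contrapositive_currified; auto.
  - assert (Hnux : forall t x u ut ux, new_ux phi t x u ut ux
             = (ux * U1 t - c1 * exp (Y0 th t)) / (Derive T t * U1 t)).
    { intros. unfold new_ux, pdet, Dt0, Dx0. rewrite PT1, PT2, PT3, PX1, PX2, PX3, PU1, PU2, PU3.
      field. split; auto. }
    intros t x u ut ux utt utx uxx Hpd HeqL.
    assert (D2 : Derive (fun s => new_ux phi t s u ut ux) x = 0).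
    { transitivity (Derive (fun _ => (ux * U1 t - c1 * exp (Y0 th t)) / (Derive T t * U1 t)) x). apply Derive_ext; intro s; apply Hnux. apply Derive_const. }
    assert (D3 : Derive (fun s => new_ux phi t x s ut ux) u = 0).
    { transitivity (Derive (fun _ => (ux * U1 t - c1 * exp (Y0 th t)) / (Derive T t * U1 t)) u). apply Derive_ext; intro s; apply Hnux. apply Derive_const. }
    assert (D4 : Derive (fun s => new_ux phi t x u s ux) ut = 0).
    { transitivity (Derive (fun _ => (ux * U1 t - c1 * exp (Y0 th t)) / (Derive T t * U1 t)) ut). apply Derive_ext; intro s; apply Hnux. apply Derive_const. }
    assert (D5 : Derive (fun s => new_ux phi t x u ut s) ux = / Derive T t).
    { transitivity (Derive (fun s => (s * U1 t - c1 * exp (Y0 th t)) / (Derive T t * U1 t)) ux). apply Derive_ext; intro s; apply Hnux. apply is_derive_unique. auto_derive.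
      split; auto. field. split; auto. }
    assert (Hut : ut = - u * ux + A2 th t x * uxx + (A11 th t * x + A10 th t) * ux).
    { unfold eqL in HeqL. lra. }
    unfold maps_eq, eqL, new_uxx, Dt1, Dx1. rewrite D2, D3, D4, D5.
    rewrite Hnux. unfold new_ut, pdet, Dt0, Dx0.
    rewrite PT1, PT2, PT3, PX1, PX2, PX3, PU1, PU2, PU3.
    destruct (Hphi t x u) as (E1&E2&E3). rewrite E1, E2, E3.
    rewrite HA2, HA11, HA10, HU1t. subst ut. unfold U1.
    field. split; auto.
Qed.

Definition EQ (th : tuple) phi th' t x u ut ux utt utx uxx :=
  eqL th' (PT phi t x u) (PX phi t x u) (PU phi t x u)
        (new_ut phi t x u ut ux) (new_ux phi t x u ut ux)
        (new_uxx phi t x u ut ux utt utx uxx).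

Lemma EQ_zero th phi th' : in_class th -> maps_eq th phi th' ->
  forall t x u ut ux utt utx, pdet phi t x u ut ux <> 0 ->
  EQ th phi th' t x u ut ux utt utx
     ((ut + u * ux - (A11 th t * x + A10 th t) * ux) / A2 th t x) = 0.
Proof.
  intros Hc HM t x u ut ux utt utx Hp. apply HM; auto.
  destruct Hc as (_&_&_&_&_&_&HA2&_). unfold eqL. field. apply HA2.
Qed.

Lemma EQ_zero' th phi th' : in_class th -> maps_eq th phi th' ->
  forall t x u ut ux utt utx uxx, pdet phi t x u ut ux <> 0 ->
  ut = - u * ux + A2 th t x * uxx + (A11 th t * x + A10 th t) * ux ->
  EQ th phi th' t x u ut ux utt utx uxx = 0.
Proof.
  intros Hc HM t x u ut ux utt utx uxx Hp Hut. apply HM; auto.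
  unfold eqL. rewrite Hut. ring.
Qed.

Lemma utt_diff th phi th' t x u ut ux utx uxx : pdet phi t x u ut ux <> 0 ->
  EQ th phi th' t x u ut ux 1 utx uxx - EQ th phi th' t x u ut ux 0 utx uxx
  = A2 th' (PT phi t x u) (PX phi t x u) * Dx0 (PT phi) t x u ux
    * Derive (fun s => new_ux phi t x u s ux) ut / pdet phi t x u ut ux.
Proof.
  intro Hp. unfold EQ, eqL, new_uxx, Dt1. field. exact Hp.
Qed.

Lemma Vut_formula phi t x u ut ux : pdet phi t x u ut ux <> 0 ->
  Derive (fun s => new_ux phi t x u s ux) ut
  = - Dx0 (PT phi) t x u ux * jacobian phi t x u / (pdet phi t x u ut ux) ^ 2.
Proof.
  intro Hp. unfold new_ux. unfold pdet in *. unfold Dt0, Dx0 in *.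
  apply is_derive_unique. auto_derive. exact Hp.
  unfold jacobian. field. exact Hp.
Qed.

Lemma comb (Tx Tu M1 M2 M3 : R) : (M1 <> 0 \/ M2 <> 0 \/ M3 <> 0) ->
  (forall ut ux, M1 + ut * M2 + ux * M3 <> 0 -> Tx + ux * Tu = 0) -> Tx = 0 /\ Tu = 0.
Proof.
  intros HM H.
  assert (K : forall a b, a <> b -> Tx + a * Tu = 0 -> Tx + b * Tu = 0 -> Tx = 0 /\ Tu = 0).
  { intros a b Hab Ha Hb. assert (Tu = 0).
    { apply Rmult_eq_reg_l with (a - b). lra. lra. } subst; lra. }
  destruct (Req_dec M2 0) as [E2|E2].
  - destruct (Req_dec M3 0) as [E3|E3].
    + assert (M1 <> 0) by (destruct HM as [?|[?|?]]; auto; contradiction).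
      apply (K 0 1). lra.
      apply (H 0 0). subst. lra. apply (H 0 1). subst. lra.
    + assert (Hb : / M3 <> 0) by (apply Rinv_neq_0_compat; auto).
      apply (K ((1 - M1) / M3) ((1 - M1) / M3 + / M3)). lra.
      apply (H 0). subst. replace (M1 + 0 * 0 + (1 - M1) / M3 * M3) with 1 by (field; auto). lra.
      apply (H 0). subst. replace (M1 + 0 * 0 + ((1 - M1) / M3 + / M3) * M3) with 2 by (field; auto). lra.
  - apply (K 0 1). lra.
    apply (H ((1 - M1 - 0 * M3) / M2)). replace (M1 + (1 - M1 - 0 * M3) / M2 * M2 + 0 * M3) with 1 by (field; auto). lra.
    apply (H ((1 - M1 - 1 * M3) / M2)). replace (M1 + (1 - M1 - 1 * M3) / M2 * M2 + 1 * M3) with 1 by (field; auto). lra.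
Qed.

Lemma stageA th phi th' : in_class th -> in_class th' -> point_transf phi -> maps_eq th phi th' ->
  forall t x u, pd3_2 (PT phi) t x u = 0 /\ pd3_3 (PT phi) t x u = 0.
Proof.
  intros Hc Hc' Hp HM t x u.
  destruct Hp as (_&_&_&HJ). specialize (HJ t x u).
  destruct Hc' as (_&_&_&_&_&_&HA2'&_).
  set (M1 := pd3_1 (PT phi) t x u * pd3_2 (PX phi) t x u - pd3_1 (PX phi) t x u * pd3_2 (PT phi) t x u).
  set (M2 := pd3_3 (PT phi) t x u * pd3_2 (PX phi) t x u - pd3_3 (PX phi) t x u * pd3_2 (PT phi) t x u).
  set (M3 := pd3_1 (PT phi) t x u * pd3_3 (PX phi) t x u - pd3_1 (PX phi) t x u * pd3_3 (PT phi) t x u).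
  apply (comb _ _ M1 M2 M3).
  - destruct (Req_dec M1 0) as [E1|E1]; auto.
    destruct (Req_dec M2 0) as [E2|E2]; auto.
    destruct (Req_dec M3 0) as [E3|E3]; auto.
    exfalso. apply HJ.
    replace (jacobian phi t x u) with (pd3_3 (PU phi) t x u * M1 - pd3_2 (PU phi) t x u * M3 - pd3_1 (PU phi) t x u * M2)
      by (unfold jacobian, M1, M2, M3; ring).
    rewrite E1, E2, E3. ring.
  - intros ut ux Hne.
    assert (Hp : pdet phi t x u ut ux <> 0).
    { replace (pdet phi t x u ut ux) with (M1 + ut * M2 + ux * M3) by (unfold pdet, Dt0, Dx0, M1, M2, M3; ring).
      exact Hne. }
    set (uxx := (ut + u * ux - (A11 th t * x + A10 th t) * ux) / A2 th t x).
    pose proof (EQ_zero th phi th' Hc HM t x u ut ux 1 0 Hp) as E1.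
    pose proof (EQ_zero th phi th' Hc HM t x u ut ux 0 0 Hp) as E0.
    pose proof (utt_diff th phi th' t x u ut ux 0 uxx Hp) as D.
    fold uxx in E1, E0. rewrite E1, E0, Vut_formula in D by exact Hp.
    assert (Z : A2 th' (PT phi t x u) (PX phi t x u) * (Dx0 (PT phi) t x u ux) ^ 2 * jacobian phi t x u = 0).
    { transitivity (- (0 - 0) * (pdet phi t x u ut ux) ^ 3). rewrite D. field. exact Hp. ring. }
    apply Rmult_integral in Z as [Z|Z]; [|contradiction].
    apply Rmult_integral in Z as [Z|Z]; [exfalso; apply (HA2' _ _ Z)|].
    unfold Dx0 in Z. nra.
Qed.

Lemma div_cancel a P Q : a <> 0 -> (a * P) / (a * Q) = P / Q.
Proof.
  intro Ha. destruct (Req_dec Q 0) as [E|E].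
  - subst. unfold Rdiv. rewrite !Rmult_0_r, Rinv_0. ring.
  - field. auto.
Qed.

Section B.
Variables (th th' : tuple) (f g h : R -> R -> R -> R).
Let phi := mkPtrans f g h.
Hypothesis HA : forall t x u, pd3_2 f t x u = 0 /\ pd3_3 f t x u = 0.
Hypothesis HTt : forall t x u, pd3_1 f t x u <> 0.

Lemma newux_B : new_ux phi = fun t x u ut ux =>
  (pd3_2 h t x u + ux * pd3_3 h t x u) / (pd3_2 g t x u + ux * pd3_3 g t x u).
Proof.
  apply functional_extensionality; intro t. apply functional_extensionality; intro x.
  apply functional_extensionality; intro u. apply functional_extensionality; intro ut.
  apply functional_extensionality; intro ux.
  unfold new_ux, pdet, Dt0, Dx0. simpl. destruct (HA t x u) as [E2 E3]. rewrite E2, E3.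
  replace ((pd3_1 f t x u + ut * 0) * (pd3_2 h t x u + ux * pd3_3 h t x u) -
   (0 + ux * 0) * (pd3_1 h t x u + ut * pd3_3 h t x u)) with
   (pd3_1 f t x u * (pd3_2 h t x u + ux * pd3_3 h t x u)) by ring.
  replace ((pd3_1 f t x u + ut * 0) * (pd3_2 g t x u + ux * pd3_3 g t x u) -
   (pd3_1 g t x u + ut * pd3_3 g t x u) * (0 + ux * 0)) with
   (pd3_1 f t x u * (pd3_2 g t x u + ux * pd3_3 g t x u)) by ring.
  apply div_cancel. apply HTt.
Qed.

Lemma EQ_B t x u ut ux utt utx uxx :
  pd3_2 g t x u + ux * pd3_3 g t x u <> 0 ->
  EQ th phi th' t x u ut ux utt utx uxx =
  ((pd3_1 h t x u + ut * pd3_3 h t x u) * (pd3_2 g t x u + ux * pd3_3 g t x u)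
    - (pd3_1 g t x u + ut * pd3_3 g t x u) * (pd3_2 h t x u + ux * pd3_3 h t x u))
     / (pd3_1 f t x u * (pd3_2 g t x u + ux * pd3_3 g t x u))
  + h t x u * ((pd3_2 h t x u + ux * pd3_3 h t x u) / (pd3_2 g t x u + ux * pd3_3 g t x u))
  - A2 th' (f t x u) (g t x u) *
    ((Derive (fun s => (pd3_2 h t s u + ux * pd3_3 h t s u) / (pd3_2 g t s u + ux * pd3_3 g t s u)) x
      + ux * Derive (fun s => (pd3_2 h t x s + ux * pd3_3 h t x s) / (pd3_2 g t x s + ux * pd3_3 g t x s)) u
      + uxx * ((pd3_3 h t x u * pd3_2 g t x u - pd3_2 h t x u * pd3_3 g t x u)
               / (pd3_2 g t x u + ux * pd3_3 g t x u) ^ 2))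
     / (pd3_2 g t x u + ux * pd3_3 g t x u))
  - (A11 th' (f t x u) * g t x u + A10 th' (f t x u))
    * ((pd3_2 h t x u + ux * pd3_3 h t x u) / (pd3_2 g t x u + ux * pd3_3 g t x u)).
Proof.
  intro Hq.
  assert (Dut : Derive (fun s => new_ux phi t x u s ux) ut = 0).
  { rewrite newux_B. apply Derive_const. }
  assert (Dux : Derive (fun s => new_ux phi t x u ut s) ux =
     (pd3_3 h t x u * pd3_2 g t x u - pd3_2 h t x u * pd3_3 g t x u)
               / (pd3_2 g t x u + ux * pd3_3 g t x u) ^ 2).
  { rewrite newux_B. apply is_derive_unique. auto_derive. exact Hq. field. exact Hq. }
  unfold EQ, new_uxx, Dx1, Dt1. rewrite Dut, Dux.
  unfold new_ut, pdet, Dt0, Dx0. rewrite newux_B. simpl.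
  destruct (HA t x u) as [E2 E3]. rewrite E2, E3.
  unfold eqL. field. split; auto.
Qed.

End B.

Lemma EQ_B_diff th th' f g h (HA : forall t x u, pd3_2 f t x u = 0 /\ pd3_3 f t x u = 0)
  (HTt : forall t x u, pd3_1 f t x u <> 0) t x u ut ux utt utx uxx a d :
  pd3_2 g t x u + ux * pd3_3 g t x u <> 0 ->
  EQ th (mkPtrans f g h) th' t x u (ut + a * d) ux utt utx (uxx + d)
  - EQ th (mkPtrans f g h) th' t x u ut ux utt utx uxx
  = d * (pd3_3 h t x u * pd3_2 g t x u - pd3_2 h t x u * pd3_3 g t x u)
    * (a * (pd3_2 g t x u + ux * pd3_3 g t x u) ^ 2 - A2 th' (f t x u) (g t x u) * pd3_1 f t x u)
    / (pd3_1 f t x u * (pd3_2 g t x u + ux * pd3_3 g t x u) ^ 3).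
Proof.
  intro Hq. rewrite !(EQ_B th th' f g h HA HTt) by exact Hq. field. split; auto.
Qed.

Lemma stageB th th' f g h : in_class th -> in_class th' -> point_transf (mkPtrans f g h) ->
  maps_eq th (mkPtrans f g h) th' ->
  (forall t x u, pd3_2 f t x u = 0 /\ pd3_3 f t x u = 0) ->
  forall t x u, pd3_3 g t x u = 0 /\
     A2 th' (f t x u) (g t x u) * pd3_1 f t x u = A2 th t x * (pd3_2 g t x u) ^ 2.
Proof.
  intros Hc Hc' Hp HM HA.
  assert (HJ : forall t x u, pd3_1 f t x u * (pd3_2 g t x u * pd3_3 h t x u - pd3_3 g t x u * pd3_2 h t x u) <> 0).
  { intros t x u. destruct Hp as (_&_&_&HJ). specialize (HJ t x u). unfold jacobian in HJ. simpl in HJ.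
    destruct (HA t x u) as [E2 E3]. rewrite E2, E3 in HJ. intro E; apply HJ. etransitivity; [|exact E]. ring. }
  assert (HTt : forall t x u, pd3_1 f t x u <> 0).
  { intros t x u E. apply (HJ t x u). rewrite E. ring. }
  assert (HK : forall t x u, pd3_3 h t x u * pd3_2 g t x u - pd3_2 h t x u * pd3_3 g t x u <> 0).
  { intros t x u E. apply (HJ t x u). replace (pd3_2 g t x u * pd3_3 h t x u - pd3_3 g t x u * pd3_2 h t x u)
      with (pd3_3 h t x u * pd3_2 g t x u - pd3_2 h t x u * pd3_3 g t x u) by ring. rewrite E. ring. }
  pose proof Hc as (_&_&_&_&_&_&HA2&_).
  assert (Key : forall t x u ux, pd3_2 g t x u + ux * pd3_3 g t x u <> 0 ->
     A2 th t x * (pd3_2 g t x u + ux * pd3_3 g t x u) ^ 2 = A2 th' (f t x u) (g t x u) * pd3_1 f t x u).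
  { intros t x u ux Hq.
    assert (Hp0 : forall ut, pdet (mkPtrans f g h) t x u ut ux <> 0).
    { intro ut. unfold pdet, Dt0, Dx0. simpl. destruct (HA t x u) as [E2 E3]. rewrite E2, E3.
      replace ((pd3_1 f t x u + ut * 0) * (pd3_2 g t x u + ux * pd3_3 g t x u) -
        (pd3_1 g t x u + ut * pd3_3 g t x u) * (0 + ux * 0)) with
        (pd3_1 f t x u * (pd3_2 g t x u + ux * pd3_3 g t x u)) by ring.
      apply Rmult_integral_contrapositive_currified; auto. }
    set (w := - u * ux + (A11 th t * x + A10 th t) * ux).
    assert (E0 : EQ th (mkPtrans f g h) th' t x u w ux 0 0 0 = 0).
    { apply (EQ_zero' th _ th' Hc HM); [apply Hp0 | unfold w; ring]. }
    assert (E1 : EQ th (mkPtrans f g h) th' t x u (w + A2 th t x * 1) ux 0 0 (0 + 1) = 0).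
    { apply (EQ_zero' th _ th' Hc HM); [apply Hp0 | unfold w; ring]. }
    pose proof (EQ_B_diff th th' f g h HA HTt t x u w ux 0 0 0 (A2 th t x) 1 Hq) as D.
    rewrite E0, E1 in D.
    assert (Z : (pd3_3 h t x u * pd3_2 g t x u - pd3_2 h t x u * pd3_3 g t x u) *
       (A2 th t x * (pd3_2 g t x u + ux * pd3_3 g t x u) ^ 2 - A2 th' (f t x u) (g t x u) * pd3_1 f t x u) = 0).
    { transitivity ((0 - 0) * (pd3_1 f t x u * (pd3_2 g t x u + ux * pd3_3 g t x u) ^ 3)).
      rewrite D. field. split; auto. ring. }
    apply Rmult_integral in Z as [Z|Z]. exfalso; apply (HK t x u Z). lra. }
  intros t x u.
  assert (Hg3 : pd3_3 g t x u = 0).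
  { destruct (Req_dec (pd3_3 g t x u) 0) as [E|E]; auto. exfalso.
    pose proof (Key t x u ((1 - pd3_2 g t x u) / pd3_3 g t x u)) as K1.
    pose proof (Key t x u ((2 - pd3_2 g t x u) / pd3_3 g t x u)) as K2.
    replace (pd3_2 g t x u + (1 - pd3_2 g t x u) / pd3_3 g t x u * pd3_3 g t x u) with 1 in K1 by (field; auto).
    replace (pd3_2 g t x u + (2 - pd3_2 g t x u) / pd3_3 g t x u * pd3_3 g t x u) with 2 in K2 by (field; auto).
    specialize (K1 ltac:(lra)). specialize (K2 ltac:(lra)).
    apply (HA2 t x). lra. }
  split; auto.
  assert (Hgx : pd3_2 g t x u <> 0).
  { intro E. apply (HK t x u). rewrite E, Hg3. ring. }
  pose proof (Key t x u 0) as K. rewrite Rmult_0_l, Rplus_0_r in K. rewrite K; auto.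
Qed.

Lemma uindep F : smooth3 F -> (forall t x u, pd3_3 F t x u = 0) -> forall t x u, F t x u = F t x 0.
Proof.
  intros HF H t x u. apply (deriv0_const' (fun s => F t x s)).
  intro s. exact (sm3_ex3 F t x s HF). intro s. apply H.
Qed.
Lemma xindep F : smooth3 F -> (forall t x u, pd3_2 F t x u = 0) -> forall t x u, F t x u = F t 0 u.
Proof.
  intros HF H t x u. apply (deriv0_const' (fun s => F t s u)).
  intro s. exact (sm3_ex2 F t s u HF). intro s. apply H.
Qed.

Lemma poly3 a0 a1 a2 : (forall y, a0 + a1 * y + a2 * y ^ 2 = 0) -> a0 = 0 /\ a1 = 0 /\ a2 = 0.
Proof.
  intro H. pose proof (H 0) as H0. pose proof (H 1) as H1. pose proof (H (-1)) as H2.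
  simpl in *. lra.
Qed.

Lemma exd_lin (p q : R -> R) k x : ex_derive p x -> ex_derive q x -> ex_derive (fun s => p s + k * q s) x.
Proof. intros. auto_derive. auto. Qed.
Lemma Derive_lin (p q : R -> R) k x : ex_derive p x -> ex_derive q x ->
  Derive (fun s => p s + k * q s) x = Derive p x + k * Derive q x.
Proof. intros. apply is_derive_unique. auto_derive. auto. etared. ring. Qed.

Section C.
Variables (th th' : tuple) (f g h : R -> R -> R -> R).
Hypothesis Hc : in_class th.
Hypothesis HM : maps_eq th (mkPtrans f g h) th'.
Hypothesis Hh : smooth3 h.
Hypothesis Hg : smooth3 g.
Hypothesis HA : forall t x u, pd3_2 f t x u = 0 /\ pd3_3 f t x u = 0.
Hypothesis HTt : forall t x u, pd3_1 f t x u <> 0.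
Hypothesis HB : forall t x u, pd3_3 g t x u = 0.
Hypothesis HBxu : forall t x u, pd3_3 (pd3_2 g) t x u = 0.
Hypothesis HXx : forall t x u, pd3_2 g t x u <> 0.

Lemma Vx_C t x u ux :
  Derive (fun s => (pd3_2 h t s u + ux * pd3_3 h t s u) / (pd3_2 g t s u + ux * pd3_3 g t s u)) x
  = ((pd3_2 (pd3_2 h) t x u + ux * pd3_2 (pd3_3 h) t x u) * pd3_2 g t x u
     - (pd3_2 h t x u + ux * pd3_3 h t x u) * pd3_2 (pd3_2 g) t x u) / (pd3_2 g t x u) ^ 2.
Proof.
  transitivity (Derive (fun s => (pd3_2 h t s u + ux * pd3_3 h t s u) / (pd3_2 g t s u)) x).
  { apply Derive_ext; intro s. rewrite HB. f_equal. ring. }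
  rewrite Derive_div.
  - rewrite (Derive_lin (fun s => pd3_2 h t s u) (fun s => pd3_3 h t s u)).
    + reflexivity.
    + exact (sm3_ex2 _ t x u (sm3_2 h Hh)).
    + exact (sm3_ex2 _ t x u (sm3_3 h Hh)).
  - apply (exd_lin (fun s => pd3_2 h t s u) (fun s => pd3_3 h t s u)). exact (sm3_ex2 _ t x u (sm3_2 h Hh)).
    exact (sm3_ex2 _ t x u (sm3_3 h Hh)).
  - exact (sm3_ex2 _ t x u (sm3_2 g Hg)).
  - apply HXx.
Qed.

Lemma Vu_C t x u ux :
  Derive (fun s => (pd3_2 h t x s + ux * pd3_3 h t x s) / (pd3_2 g t x s + ux * pd3_3 g t x s)) u
  = (pd3_3 (pd3_2 h) t x u + ux * pd3_3 (pd3_3 h) t x u) / pd3_2 g t x u.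
Proof.
  transitivity (Derive (fun s => (pd3_2 h t x s + ux * pd3_3 h t x s) / (pd3_2 g t x s)) u).
  { apply Derive_ext; intro s. rewrite HB. f_equal. ring. }
  rewrite Derive_div.
  - rewrite (Derive_lin (fun s => pd3_2 h t x s) (fun s => pd3_3 h t x s)).
    + assert (HD : Derive (pd3_2 g t x) u = 0) by exact (HBxu t x u). rewrite HD.
      unfold pd3_3 at 3 4. field. apply HXx.
    + exact (sm3_ex3 _ t x u (sm3_2 h Hh)).
    + exact (sm3_ex3 _ t x u (sm3_3 h Hh)).
  - apply (exd_lin (fun s => pd3_2 h t x s) (fun s => pd3_3 h t x s)). exact (sm3_ex3 _ t x u (sm3_2 h Hh)).
    exact (sm3_ex3 _ t x u (sm3_3 h Hh)).
  - exact (sm3_ex3 _ t x u (sm3_2 g Hg)).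
  - apply HXx.
Qed.

Lemma stageC t x u :
  let Tt := pd3_1 f t x u in let Xt := pd3_1 g t x u in let Xx := pd3_2 g t x u in
  let Xxx := pd3_2 (pd3_2 g) t x u in
  let Ut := pd3_1 h t x u in let Ux := pd3_2 h t x u in let Uu := pd3_3 h t x u in
  let Uxx := pd3_2 (pd3_2 h) t x u in let Uux := pd3_2 (pd3_3 h) t x u in
  let Uxu := pd3_3 (pd3_2 h) t x u in let Uuu := pd3_3 (pd3_3 h) t x u in
  let B2 := A2 th' (f t x u) (g t x u) in
  let L := A11 th' (f t x u) * g t x u + A10 th' (f t x u) in
  let w := - u + A11 th t * x + A10 th t in
  let H := h t x u in
  (Ut * Xx - Xt * Ux) / (Tt * Xx) + H * Ux / Xx - B2 * (Uxx * Xx - Ux * Xxx) / Xx ^ 3 - L * Ux / Xx = 0 /\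
  (w * Uu * Xx - Xt * Uu) / (Tt * Xx) + H * Uu / Xx
     - B2 * ((Uux * Xx - Uu * Xxx) / Xx ^ 2 + Uxu / Xx) / Xx - L * Uu / Xx = 0 /\
  - B2 * Uuu / Xx ^ 2 = 0.
Proof.
  intros. apply poly3. intro ux.
  assert (Hp : pdet (mkPtrans f g h) t x u (w * ux) ux <> 0).
  { unfold pdet, Dt0, Dx0. simpl. destruct (HA t x u) as [E2 E3]. rewrite E2, E3, HB.
    replace ((pd3_1 f t x u + w * ux * 0) * (pd3_2 g t x u + ux * 0) -
      (pd3_1 g t x u + w * ux * 0) * (0 + ux * 0)) with (pd3_1 f t x u * pd3_2 g t x u) by ring.
    apply Rmult_integral_contrapositive_currified; auto. }
  assert (HE : EQ th (mkPtrans f g h) th' t x u (w * ux) ux 0 0 0 = 0).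
  { apply (EQ_zero' th _ th' Hc HM). exact Hp. unfold w. ring. }
  rewrite (EQ_B th th' f g h HA HTt) in HE by (rewrite HB; rewrite Rmult_0_r, Rplus_0_r; apply HXx).
  rewrite Vx_C, Vu_C, HB in HE.
  rewrite <- HE. unfold Tt, Xt, Xx, Xxx, Ut, Ux, Uu, Uxx, Uux, Uxu, Uuu, B2, L, H.
  field. split; auto.
Qed.
End C.

Definition A1e (Tt Xt Xx Xxx Uu Uux Uxu B2 L w H : R) :=
  (w * Uu * Xx - Xt * Uu) / (Tt * Xx) + H * Uu / Xx
     - B2 * ((Uux * Xx - Uu * Xxx) / Xx ^ 2 + Uxu / Xx) / Xx - L * Uu / Xx.
Definition A0e (Tt Xt Xx Xxx Ut Ux Uxx B2 L H : R) :=
  (Ut * Xx - Xt * Ux) / (Tt * Xx) + H * Ux / Xx - B2 * (Uxx * Xx - Ux * Xxx) / Xx ^ 3 - L * Ux / Xx.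

Lemma A1_lin Tt Xt Xx Xxx U1 Uux Uxu B2 L w0 U0 u : Tt <> 0 -> Xx <> 0 ->
  A1e Tt Xt Xx Xxx U1 Uux Uxu B2 L (- u + w0) (U1 * u + U0)
  = A1e Tt Xt Xx Xxx U1 Uux Uxu B2 L w0 U0 + (U1 * (U1 * Tt - Xx) / (Tt * Xx)) * u.
Proof. intros. unfold A1e. field. auto. Qed.

Lemma A0_quad Tt Xt Xx Xxx U1t U0t U1x U0x U1xx U0xx B2 L U1 U0 u : Tt <> 0 -> Xx <> 0 ->
  A0e Tt Xt Xx Xxx (U1t * u + U0t) (U1x * u + U0x) (U1xx * u + U0xx) B2 L (U1 * u + U0)
  = A0e Tt Xt Xx Xxx U0t U0x U0xx B2 L U0
    + ((U1t * Xx - Xt * U1x) / (Tt * Xx) + (U1 * U0x + U0 * U1x) / Xx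
        - B2 * (U1xx * Xx - U1x * Xxx) / Xx ^ 3 - L * U1x / Xx) * u
    + (U1 * U1x / Xx) * u ^ 2.
Proof. intros. unfold A0e. field. auto. Qed.

Lemma poly2 a0 a1 : (forall y, a0 + a1 * y = 0) -> a0 = 0 /\ a1 = 0.
Proof. intro H. pose proof (H 0). pose proof (H 1). lra. Qed.

Lemma Derive_lin2 (p q : R -> R) k x : ex_derive p x -> ex_derive q x ->
  Derive (fun s => p s * k + q s) x = Derive p x * k + Derive q x.
Proof. intros. apply is_derive_unique. auto_derive. auto. etared. ring. Qed.

Lemma pd_affu (F : R -> R -> R -> R) (P Q : R -> R -> R) :
  (forall t x u, F t x u = P t x * u + Q t x) -> smooth2 P -> smooth2 Q ->
  forall t x u, pd3_1 F t x u = pd2_1 P t x * u + pd2_1 Q t x /\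
                pd3_2 F t x u = pd2_2 P t x * u + pd2_2 Q t x /\
                pd3_3 F t x u = P t x.
Proof.
  intros HF HP HQ t x u. split; [|split].
  - unfold pd3_1. transitivity (Derive (fun s => (fun s => P s x) s * u + (fun s => Q s x) s) t). apply Derive_ext; intro; apply HF.
    apply Derive_lin2. exact (sm2_ex1 P t x HP). exact (sm2_ex1 Q t x HQ).
  - unfold pd3_2. transitivity (Derive (fun s => (fun s => P t s) s * u + (fun s => Q t s) s) x). apply Derive_ext; intro; apply HF.
    apply Derive_lin2. exact (sm2_ex2 P t x HP). exact (sm2_ex2 Q t x HQ).
  - unfold pd3_3. transitivity (Derive (fun s => P t x * s + Q t x) u). apply Derive_ext; intro; apply HF.
    apply is_derive_unique. auto_derive. auto. ring.
Qed.

Lemma pd_2d (F : R -> R -> R -> R) (G : R -> R -> R) :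
  (forall t x u, F t x u = G t x) ->
  forall t x u, pd3_1 F t x u = pd2_1 G t x /\ pd3_2 F t x u = pd2_2 G t x /\ pd3_3 F t x u = 0.
Proof.
  intros HF t x u. split; [|split].
  - unfold pd3_1, pd2_1. apply Derive_ext. intro; apply HF.
  - unfold pd3_2, pd2_2. apply Derive_ext. intro; apply HF.
  - unfold pd3_3. transitivity (Derive (fun _ => G t x) u). apply Derive_ext; intro; apply HF. apply Derive_const.
Qed.

Section F.
Variables (th th' : tuple) (f g h : R -> R -> R -> R).
Hypothesis Hc : in_class th.
Hypothesis Hc' : in_class th'.
Hypothesis Hp : point_transf (mkPtrans f g h).
Hypothesis HM : maps_eq th (mkPtrans f g h) th'.

Lemma F_sm : smooth3 f /\ smooth3 g /\ smooth3 h.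
Proof. destruct Hp as (?&?&?&_). auto. Qed.
Lemma F_A : forall t x u, pd3_2 f t x u = 0 /\ pd3_3 f t x u = 0.
Proof. exact (stageA th (mkPtrans f g h) th' Hc Hc' Hp HM). Qed.
Lemma F_B : forall t x u, pd3_3 g t x u = 0 /\
     A2 th' (f t x u) (g t x u) * pd3_1 f t x u = A2 th t x * (pd3_2 g t x u) ^ 2.
Proof. exact (stageB th th' f g h Hc Hc' Hp HM F_A). Qed.
Lemma F_J t x u : pd3_1 f t x u <> 0 /\ pd3_2 g t x u <> 0 /\ pd3_3 h t x u <> 0.
Proof.
  destruct Hp as (_&_&_&HJ). specialize (HJ t x u). unfold jacobian in HJ. simpl in HJ.
  destruct (F_A t x u) as [E2 E3]. destruct (F_B t x u) as [E4 _]. rewrite E2, E3, E4 in HJ.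
  repeat split; intro E; apply HJ; rewrite E; ring.
Qed.
Lemma F_Bxu t x u : pd3_3 (pd3_2 g) t x u = 0.
Proof.
  destruct F_sm as (_&Hg&_).
  assert (E : forall t r s, g t r s = g t r 0) by (apply uindep; auto; intros; apply F_B).
  unfold pd3_3. transitivity (Derive (fun _ => pd3_2 g t x 0) u).
  apply Derive_ext; intro s. unfold pd3_2. apply Derive_ext; intro r. apply E.
  apply Derive_const.
Qed.
Definition F_C t x u := stageC th th' f g h Hc HM (proj2 (proj2 F_sm)) (proj1 (proj2 F_sm)) F_A
   (fun t x u => proj1 (F_J t x u)) (fun t x u => proj1 (F_B t x u)) F_Bxu
   (fun t x u => proj1 (proj2 (F_J t x u))) t x u.

Lemma F_Uuu t x u : pd3_3 (pd3_3 h) t x u = 0.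
Proof.
  pose proof (F_C t x u) as C. cbv zeta in C. destruct C as (_&_&C).
  destruct (F_J t x u) as (_&HX&_). pose proof Hc' as (_&_&_&_&_&_&HA2'&_).
  apply (f_equal (fun z => z * (pd3_2 g t x u) ^ 2 / (- A2 th' (f t x u) (g t x u)))) in C.
  field_simplify in C; auto. rewrite C. field. auto.
Qed.

Lemma Derive_lin' (p : R -> R) k x : ex_derive p x -> Derive (fun s => p s - k * s) x = Derive p x - k.
Proof. intros. apply is_derive_unique. auto_derive. auto. etared. ring. Qed.

Definition T0 := fun t => f t 0 0.
Definition G0 := fun t x => g t x 0.
Definition U10 := fun t x => pd3_3 h t x 0.
Definition U00 := fun t x => h t x 0.

Lemma F_fT t x u : f t x u = T0 t.
Proof.
  destruct F_sm as (Hf&_&_). unfold T0.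
  rewrite (uindep f Hf (fun t x u => proj2 (F_A t x u))).
  apply (xindep f Hf (fun t x u => proj1 (F_A t x u))).
Qed.
Lemma F_gG t x u : g t x u = G0 t x.
Proof.
  destruct F_sm as (_&Hg&_). unfold G0.
  apply (uindep g Hg (fun t x u => proj1 (F_B t x u))).
Qed.
Lemma F_hU t x u : h t x u = U10 t x * u + U00 t x.
Proof.
  destruct F_sm as (_&_&Hh). unfold U10, U00.
  assert (E : forall s, pd3_3 h t x s = pd3_3 h t x 0).
  { intro s. apply (uindep (pd3_3 h) (sm3_3 h Hh) F_Uuu). }
  assert (K : (fun s => h t x s - pd3_3 h t x 0 * s) u = (fun s => h t x s - pd3_3 h t x 0 * s) 0).
  { apply (deriv0_const' (fun s => h t x s - pd3_3 h t x 0 * s)).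
    - intro s. apply (ex_derive_minus (fun s => h t x s) (fun s => pd3_3 h t x 0 * s)).
      exact (sm3_ex3 h t x s Hh). auto_derive. auto.
    - intro s. rewrite (Derive_lin' (fun s => h t x s)). 
      change (Derive (fun s => h t x s) s) with (pd3_3 h t x s). rewrite (E s). ring.
      exact (sm3_ex3 h t x s Hh). }
  simpl in K. lra.
Qed.
End F.

Lemma A1e_assoc Tt Xt Xx Xxx Uu Uux Uxu B2 L u p q H :
  A1e Tt Xt Xx Xxx Uu Uux Uxu B2 L (- u + (p + q)) H = A1e Tt Xt Xx Xxx Uu Uux Uxu B2 L (- u + p + q) H.
Proof. f_equal. ring. Qed.

Lemma frac_zero a b : a / b = 0 -> b <> 0 -> a = 0.
Proof. intros H Hb. apply (f_equal (fun z => z * b)) in H. field_simplify in H; auto. Qed.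

Lemma c_alg tau U1t Xx Xt U1 U0x U0 B2 Xxx L : tau <> 0 -> U1 <> 0 -> Xx = tau * U1 ->
  (U1t * Xx - Xt * 0) / (tau * Xx) + (U1 * U0x + U0 * 0) / Xx - B2 * (0 * Xx - 0 * Xxx) / Xx ^ 3 - L * 0 / Xx
  = (U1t + U0x) / tau.
Proof. intros. subst. field. auto. Qed.

Lemma d_alg tau Xt u1 B2 L w0 U0 : tau <> 0 -> u1 <> 0 ->
  A1e tau Xt (tau * u1) 0 u1 0 0 B2 L w0 U0 = (w0 * u1 - Xt / tau + U0 - L) / tau.
Proof. intros. unfold A1e. field. auto. Qed.

Lemma e_alg tau Xt u1 u1' U0t B2 w0 U0 : tau <> 0 -> u1 <> 0 ->
  A0e tau Xt (tau * u1) 0 U0t (- u1') 0 B2 (w0 * u1 - Xt / tau + U0) U0 = (U0t + w0 * u1') / tau.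
Proof. intros. unfold A0e. field. auto. Qed.

Section G.
Variables (th th' : tuple) (f g h : R -> R -> R -> R).
Hypothesis Hc : in_class th.
Hypothesis Hc' : in_class th'.
Hypothesis Hp : point_transf (mkPtrans f g h).
Hypothesis HM : maps_eq th (mkPtrans f g h) th'.

Let Hf := proj1 (F_sm f g h Hp).
Let Hg := proj1 (proj2 (F_sm f g h Hp)).
Let Hh := proj2 (proj2 (F_sm f g h Hp)).
Let T := T0 f.
Let G := G0 g.
Let U1 := U10 h.
Let U0 := U00 h.
Lemma sG : smooth2 G. Proof. exact (sm3_slice12 g 0 Hg). Qed.
Lemma sU1 : smooth2 U1. Proof. exact (sm3_slice12 (pd3_3 h) 0 (sm3_3 h Hh)). Qed.
Lemma sU0 : smooth2 U0. Proof. exact (sm3_slice12 h 0 Hh). Qed.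
Lemma sT : smooth1 T. Proof. exact (sm3_slice1 f 0 0 Hf). Qed.

Lemma Pf t x u : pd3_1 f t x u = Derive T t.
Proof. unfold pd3_1. apply Derive_ext. intro s. apply (F_fT th th' f g h Hc Hc' Hp HM). Qed.
Let Pg := pd_2d g G (F_gG th th' f g h Hc Hc' Hp HM).
Let Pgg := pd_2d (pd3_2 g) (pd2_2 G) (fun t x u => proj1 (proj2 (Pg t x u))).
Let Ph := pd_affu h U1 U0 (F_hU th th' f g h Hc Hc' Hp HM) sU1 sU0.
Let Phx := pd_affu (pd3_2 h) (pd2_2 U1) (pd2_2 U0) (fun t x u => proj1 (proj2 (Ph t x u)))
   (sm2_2 U1 sU1) (sm2_2 U0 sU0).
Let Phu := pd_2d (pd3_3 h) U1 (fun t x u => proj2 (proj2 (Ph t x u))).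

Lemma G_nz t x : Derive T t <> 0 /\ pd2_2 G t x <> 0 /\ U1 t x <> 0.
Proof.
  destruct (F_J th th' f g h Hc Hc' Hp HM t x 0) as (J1&J2&J3).
  rewrite Pf in J1. rewrite (proj1 (proj2 (Pg t x 0))) in J2. rewrite (proj2 (proj2 (Ph t x 0))) in J3.
  auto.
Qed.

Lemma G_C t x u :
  let tau := Derive T t in let Xt := pd2_1 G t x in let Xx := pd2_2 G t x in
  let Xxx := pd2_2 (pd2_2 G) t x in
  let B2 := A2 th' (T t) (G t x) in
  let L := A11 th' (T t) * G t x + A10 th' (T t) in
  A0e tau Xt Xx Xxx (pd2_1 U1 t x * u + pd2_1 U0 t x) (pd2_2 U1 t x * u + pd2_2 U0 t x)
      (pd2_2 (pd2_2 U1) t x * u + pd2_2 (pd2_2 U0) t x) B2 L (U1 t x * u + U0 t x) = 0 /\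
  A1e tau Xt Xx Xxx (U1 t x) (pd2_2 U1 t x) (pd2_2 U1 t x) B2 L (- u + (A11 th t * x + A10 th t))
      (U1 t x * u + U0 t x) = 0.
Proof.
  intros. pose proof (F_C th th' f g h Hc Hc' Hp HM t x u) as C. cbv zeta in C.
  destruct C as (C0&C1&_).
  destruct (Pg t x u) as (Pg1&Pg2&_). destruct (Pgg t x u) as (_&Pgg2&_).
  destruct (Ph t x u) as (Ph1&Ph2&Ph3). destruct (Phx t x u) as (_&Phx2&Phx3).
  destruct (Phu t x u) as (_&Phu2&_).
  rewrite ?Pf, ?Pg1, ?Pg2, ?Pgg2, ?Ph1, ?Ph2, ?Ph3, ?Phx2, ?Phx3, ?Phu2 in C0.
  rewrite ?Pf, ?Pg1, ?Pg2, ?Pgg2, ?Ph1, ?Ph2, ?Ph3, ?Phx2, ?Phx3, ?Phu2 in C1.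
  rewrite ?(F_fT th th' f g h Hc Hc' Hp HM), ?(F_gG th th' f g h Hc Hc' Hp HM),
    ?(F_hU th th' f g h Hc Hc' Hp HM) in C0.
  rewrite ?(F_fT th th' f g h Hc Hc' Hp HM), ?(F_gG th th' f g h Hc Hc' Hp HM),
    ?(F_hU th th' f g h Hc Hc' Hp HM) in C1.
  split.
  - etransitivity; [|exact C0]. unfold A0e. reflexivity.
  - rewrite A1e_assoc. exact C1.
Qed.

Lemma G_K t x :
  let tau := Derive T t in let Xt := pd2_1 G t x in let Xx := pd2_2 G t x in
  let Xxx := pd2_2 (pd2_2 G) t x in
  let B2 := A2 th' (T t) (G t x) in
  let L := A11 th' (T t) * G t x + A10 th' (T t) in
  Xx = tau * U1 t x /\ pd2_2 U1 t x = 0 /\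
  (pd2_1 U1 t x * Xx - Xt * pd2_2 U1 t x) / (tau * Xx)
    + (U1 t x * pd2_2 U0 t x + U0 t x * pd2_2 U1 t x) / Xx
    - B2 * (pd2_2 (pd2_2 U1) t x * Xx - pd2_2 U1 t x * Xxx) / Xx ^ 3 - L * pd2_2 U1 t x / Xx = 0 /\
  A1e tau Xt Xx Xxx (U1 t x) (pd2_2 U1 t x) (pd2_2 U1 t x) B2 L (A11 th t * x + A10 th t) (U0 t x) = 0 /\
  A0e tau Xt Xx Xxx (pd2_1 U0 t x) (pd2_2 U0 t x) (pd2_2 (pd2_2 U0) t x) B2 L (U0 t x) = 0.
Proof.
  intros. destruct (G_nz t x) as (N1&N2&N3).
  assert (P1 : forall u, A1e tau Xt Xx Xxx (U1 t x) (pd2_2 U1 t x) (pd2_2 U1 t x) B2 L (A11 th t * x + A10 th t) (U0 t x)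
     + (U1 t x * (U1 t x * tau - Xx) / (tau * Xx)) * u = 0).
  { intro u. rewrite <- A1_lin by auto. exact (proj2 (G_C t x u)). }
  assert (P0 : forall u, A0e tau Xt Xx Xxx (pd2_1 U0 t x) (pd2_2 U0 t x) (pd2_2 (pd2_2 U0) t x) B2 L (U0 t x)
    + ((pd2_1 U1 t x * Xx - Xt * pd2_2 U1 t x) / (tau * Xx) + (U1 t x * pd2_2 U0 t x + U0 t x * pd2_2 U1 t x) / Xx
        - B2 * (pd2_2 (pd2_2 U1) t x * Xx - pd2_2 U1 t x * Xxx) / Xx ^ 3 - L * pd2_2 U1 t x / Xx) * u
    + (U1 t x * pd2_2 U1 t x / Xx) * u ^ 2 = 0).
  { intro u. rewrite <- A0_quad by auto. exact (proj1 (G_C t x u)). }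
  apply poly2 in P1 as [P1a P1b]. apply poly3 in P0 as (P0a&P0b&P0c).
  assert (Ea : Xx = tau * U1 t x).
  { apply frac_zero in P1b. apply Rmult_integral in P1b as [P|P]. contradiction. lra.
    apply Rmult_integral_contrapositive_currified; auto. }
  assert (Eb : pd2_2 U1 t x = 0).
  { apply frac_zero in P0c; auto. apply Rmult_integral in P0c as [P|P]. contradiction. exact P. }
  auto.
Qed.

Definition u1 := fun t => U1 t 0.
Lemma su1 : smooth1 u1. Proof. exact (sm3_slice1 (pd3_3 h) 0 0 (sm3_3 h Hh)). Qed.
Lemma sG1 x : smooth1 (fun t => G t x). Proof. exact (sm2_slice1 G x sG). Qed.
Lemma sU01 x : smooth1 (fun t => U0 t x). Proof. exact (sm2_slice1 U0 x sU0). Qed.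

Lemma G_U1 t x : U1 t x = u1 t.
Proof.
  unfold u1. apply (deriv0_const' (fun s => U1 t s)).
  intro s. exact (sm2_ex2 U1 t s sU1). intro s. exact (proj1 (proj2 (G_K t s))).
Qed.
Lemma G_U1t t x : pd2_1 U1 t x = Derive u1 t.
Proof. unfold pd2_1. apply Derive_ext. intro s. apply G_U1. Qed.
Lemma G_U1xx t x : pd2_2 (pd2_2 U1) t x = 0.
Proof.
  unfold pd2_2 at 1. transitivity (Derive (fun _ => 0) x). apply Derive_ext. intro s.
  exact (proj1 (proj2 (G_K t s))). apply Derive_const.
Qed.
Lemma G_Xx t x : pd2_2 G t x = Derive T t * u1 t.
Proof. rewrite <- (G_U1 t x). exact (proj1 (G_K t x)). Qed.
Lemma G_U0x t x : pd2_2 U0 t x = - Derive u1 t.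
Proof.
  destruct (G_nz t x) as (N1&N2&N3).
  pose proof (proj1 (proj2 (proj2 (G_K t x)))) as C. cbv zeta in C.
  rewrite (proj1 (proj2 (G_K t x))), G_U1xx in C.
  rewrite c_alg in C; auto. apply frac_zero in C; auto. rewrite G_U1t in C. lra.
  exact (proj1 (G_K t x)).
Qed.

Lemma Derive_lin3 (p : R -> R) k x : ex_derive p x -> Derive (fun s => p s - k * s) x = Derive p x - k.
Proof. intros. apply is_derive_unique. auto_derive. auto. etared. ring. Qed.

Lemma G_G t x : G t x = Derive T t * u1 t * x + G t 0.
Proof.
  assert (K : (fun s => G t s - (Derive T t * u1 t) * s) x = (fun s => G t s - (Derive T t * u1 t) * s) 0).
  { apply (deriv0_const' (fun s => G t s - (Derive T t * u1 t) * s)).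
    - intro s. apply (ex_derive_minus (fun s => G t s) (fun s => (Derive T t * u1 t) * s)).
      exact (sm2_ex2 G t s sG). auto_derive. auto.
    - intro s. rewrite (Derive_lin3 (fun s => G t s)). change (Derive (fun s => G t s) s) with (pd2_2 G t s).
      rewrite G_Xx. ring. exact (sm2_ex2 G t s sG). }
  simpl in K. lra.
Qed.
Lemma G_U0 t x : U0 t x = - Derive u1 t * x + U0 t 0.
Proof.
  assert (K : (fun s => U0 t s - (- Derive u1 t) * s) x = (fun s => U0 t s - (- Derive u1 t) * s) 0).
  { apply (deriv0_const' (fun s => U0 t s - (- Derive u1 t) * s)).
    - intro s. apply (ex_derive_minus (fun s => U0 t s) (fun s => (- Derive u1 t) * s)).
      exact (sm2_ex2 U0 t s sU0). auto_derive. auto.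
    - intro s. rewrite (Derive_lin3 (fun s => U0 t s)). change (Derive (fun s => U0 t s) s) with (pd2_2 U0 t s).
      rewrite G_U0x. ring. exact (sm2_ex2 U0 t s sU0). }
  simpl in K. lra.
Qed.

Definition X0 := fun t => G t 0.
Definition U00' := fun t => U0 t 0.
Lemma sX0 : smooth1 X0. Proof. exact (sG1 0). Qed.
Lemma sU00 : smooth1 U00'. Proof. exact (sU01 0). Qed.

Lemma G_Xxx t x : pd2_2 (pd2_2 G) t x = 0.
Proof.
  unfold pd2_2 at 1. transitivity (Derive (fun _ => Derive T t * u1 t) x). apply Derive_ext. intro s.
  apply G_Xx. apply Derive_const.
Qed.
Lemma G_U0xx t x : pd2_2 (pd2_2 U0) t x = 0.
Proof.
  unfold pd2_2 at 1. transitivity (Derive (fun _ => - Derive u1 t) x). apply Derive_ext. intro s.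
  apply G_U0x. apply Derive_const.
Qed.
Lemma G_Xt t x : pd2_1 G t x = (Derive (Derive T) t * u1 t + Derive T t * Derive u1 t) * x + Derive X0 t.
Proof.
  unfold pd2_1. transitivity (Derive (fun s => Derive T s * u1 s * x + X0 s) t).
  apply Derive_ext. intro s. apply G_G.
  pose proof (smooth1_ex _ t (smooth1_D _ sT)). pose proof (smooth1_ex _ t su1). pose proof (smooth1_ex _ t sX0).
  apply is_derive_unique. auto_derive. auto. etared. ring.
Qed.
Lemma G_U0t t x : pd2_1 U0 t x = - Derive (Derive u1) t * x + Derive U00' t.
Proof.
  unfold pd2_1. transitivity (Derive (fun s => - Derive u1 s * x + U00' s) t).
  apply Derive_ext. intro s. apply G_U0.
  pose proof (smooth1_ex _ t (smooth1_D _ su1)). pose proof (smooth1_ex _ t sU00).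
  apply is_derive_unique. auto_derive. auto. etared. ring.
Qed.

Lemma G_L t x : A11 th' (T t) * G t x + A10 th' (T t)
  = (A11 th t * x + A10 th t) * u1 t - pd2_1 G t x / Derive T t + U0 t x.
Proof.
  destruct (G_nz t x) as (N1&N2&N3). rewrite G_U1 in N3.
  pose proof (proj1 (proj2 (proj2 (proj2 (G_K t x))))) as C. cbv zeta in C.
  rewrite G_Xx, G_Xxx, G_U1, (proj1 (proj2 (G_K t x))), d_alg in C; auto.
  apply frac_zero in C; auto. lra.
Qed.
Lemma G_E t x : pd2_1 U0 t x + (A11 th t * x + A10 th t) * Derive u1 t = 0.
Proof.
  destruct (G_nz t x) as (N1&N2&N3). rewrite G_U1 in N3.
  pose proof (proj2 (proj2 (proj2 (proj2 (G_K t x))))) as C. cbv zeta in C.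
  rewrite G_L, G_Xx, G_Xxx, G_U0x, G_U0xx, e_alg in C; auto.
  apply frac_zero in C; auto.
Qed.
Lemma G_A2 t x : A2 th' (T t) (G t x) * Derive T t = A2 th t x * (Derive T t * u1 t) ^ 2.
Proof.
  pose proof (proj2 (F_B th th' f g h Hc Hc' Hp HM t x 0)) as B.
  rewrite (F_fT th th' f g h Hc Hc' Hp HM), (F_gG th th' f g h Hc Hc' Hp HM), Pf in B.
  rewrite (proj1 (proj2 (Pg t x 0))), G_Xx in B. exact B.
Qed.
End G.

Definition Facts (th th' : tuple) (phi : ptrans) (T u1 X0 U00 : R -> R) : Prop :=
  smooth1 T /\ smooth1 u1 /\ smooth1 X0 /\ smooth1 U00 /\
  (forall t, Derive T t <> 0) /\ (forall t, u1 t <> 0) /\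
  (forall t x u, PT phi t x u = T t /\ PX phi t x u = Derive T t * u1 t * x + X0 t /\
                 PU phi t x u = u1 t * u - Derive u1 t * x + U00 t) /\
  (forall t x, A2 th' (T t) (Derive T t * u1 t * x + X0 t) * Derive T t = A2 th t x * (Derive T t * u1 t) ^ 2) /\
  (forall t x, A11 th' (T t) * (Derive T t * u1 t * x + X0 t) + A10 th' (T t)
     = (A11 th t * x + A10 th t) * u1 t
       - ((Derive (Derive T) t * u1 t + Derive T t * Derive u1 t) * x + Derive X0 t) / Derive T t
       + (- Derive u1 t * x + U00 t)) /\
  (forall t x, (- Derive (Derive u1) t * x + Derive U00 t) + (A11 th t * x + A10 th t) * Derive u1 t = 0).

Lemma bridge th th' f g h : in_class th -> in_class th' -> point_transf (mkPtrans f g h) ->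
  maps_eq th (mkPtrans f g h) th' ->
  Facts th th' (mkPtrans f g h) (T0 f) (u1 h) (X0 g) (U00' h).
Proof.
  intros Hc Hc' Hp HM.
  assert (HGG : forall t x, G0 g t x = Derive (T0 f) t * u1 h t * x + X0 g t).
  { intros. exact (G_G th th' f g h Hc Hc' Hp HM t x). }
  assert (HU0 : forall t x, U00 h t x = - Derive (u1 h) t * x + U00' h t).
  { intros. exact (G_U0 th th' f g h Hc Hc' Hp HM t x). }
  split; [|split; [|split; [|split; [|split; [|split; [|split; [|split; [|split]]]]]]]].
  - exact (sT f g h Hp).
  - exact (su1 f g h Hp).
  - exact (sX0 f g h Hp).
  - exact (sU00 f g h Hp).
  - intro t. exact (proj1 (G_nz th th' f g h Hc Hc' Hp HM t 0)).
  - intro t. pose proof (proj2 (proj2 (G_nz th th' f g h Hc Hc' Hp HM t 0))) as N.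
    rewrite (G_U1 th th' f g h Hc Hc' Hp HM) in N. exact N.
  - intros t x u. simpl. split; [|split].
    + exact (F_fT th th' f g h Hc Hc' Hp HM t x u).
    + rewrite (F_gG th th' f g h Hc Hc' Hp HM). apply HGG.
    + rewrite (F_hU th th' f g h Hc Hc' Hp HM). unfold U10. 
      change (pd3_3 h t x 0) with (U10 h t x). rewrite (G_U1 th th' f g h Hc Hc' Hp HM), HU0. ring.
  - intros t x. rewrite <- HGG. exact (G_A2 th th' f g h Hc Hc' Hp HM t x).
  - intros t x. rewrite <- HGG, <- HU0, <- (G_Xt th th' f g h Hc Hc' Hp HM).
    exact (G_L th th' f g h Hc Hc' Hp HM t x).
  - intros t x. rewrite <- (G_U0t th th' f g h Hc Hc' Hp HM). exact (G_E th th' f g h Hc Hc' Hp HM t x).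
Qed.

Section Fin.
Variables (th th' : tuple) (phi : ptrans) (T u1 X0 U00 : R -> R).
Hypothesis Hc : in_class th.
Hypothesis Hc' : in_class th'.
Hypothesis HF : Facts th th' phi T u1 X0 U00.

Let HsT := proj1 HF.
Let Hsu1 := proj1 (proj2 HF).
Let HsX0 := proj1 (proj2 (proj2 HF)).
Let HsU00 := proj1 (proj2 (proj2 (proj2 HF))).
Let HTt := proj1 (proj2 (proj2 (proj2 (proj2 HF)))).
Let Hu1 := proj1 (proj2 (proj2 (proj2 (proj2 (proj2 HF))))).
Let Hphi := proj1 (proj2 (proj2 (proj2 (proj2 (proj2 (proj2 HF)))))).
Let HA2 := proj1 (proj2 (proj2 (proj2 (proj2 (proj2 (proj2 (proj2 HF))))))).
Let HL := proj1 (proj2 (proj2 (proj2 (proj2 (proj2 (proj2 (proj2 (proj2 HF)))))))).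
Let HE := proj2 (proj2 (proj2 (proj2 (proj2 (proj2 (proj2 (proj2 (proj2 HF)))))))).

Lemma exT t : ex_derive T t. Proof. exact (smooth1_ex _ t HsT). Qed.
Lemma exTt t : ex_derive (Derive T) t. Proof. exact (smooth1_ex _ t (smooth1_D _ HsT)). Qed.
Lemma exu1 t : ex_derive u1 t. Proof. exact (smooth1_ex _ t Hsu1). Qed.
Lemma exu1t t : ex_derive (Derive u1) t. Proof. exact (smooth1_ex _ t (smooth1_D _ Hsu1)). Qed.
Lemma exX0 t : ex_derive X0 t. Proof. exact (smooth1_ex _ t HsX0). Qed.
Lemma exU00 t : ex_derive U00 t. Proof. exact (smooth1_ex _ t HsU00). Qed.
Lemma exY0 t : ex_derive (Y0 th) t. Proof. destruct Hc as (_&_&_&H&_). exact (smooth1_ex _ t H). Qed.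
Lemma exY1 t : ex_derive (Y1 th) t. Proof. destruct Hc as (_&_&_&_&H&_). exact (smooth1_ex _ t H). Qed.
Lemma exY2 t : ex_derive (Y2 th) t. Proof. destruct Hc as (_&_&_&_&_&H&_). exact (smooth1_ex _ t H). Qed.
Lemma exY0' t : ex_derive (Y0 th') t. Proof. destruct Hc' as (_&_&_&H&_). exact (smooth1_ex _ t H). Qed.
Lemma exY1' t : ex_derive (Y1 th') t. Proof. destruct Hc' as (_&_&_&_&H&_). exact (smooth1_ex _ t H). Qed.
Lemma exY2' t : ex_derive (Y2 th') t. Proof. destruct Hc' as (_&_&_&_&_&H&_). exact (smooth1_ex _ t H). Qed.
Lemma dY0 t : Derive (Y0 th) t = A11 th t. Proof. destruct Hc as (_&_&_&_&_&_&_&H&_). apply H. Qed.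
Lemma dY1 t : Derive (Y1 th) t = exp (Y0 th t). Proof. destruct Hc as (_&_&_&_&_&_&_&_&H&_). apply H. Qed.
Lemma dY2 t : Derive (Y2 th) t = A10 th t * exp (Y0 th t). Proof. destruct Hc as (_&_&_&_&_&_&_&_&_&H). apply H. Qed.
Lemma dY0' t : Derive (Y0 th') t = A11 th' t. Proof. destruct Hc' as (_&_&_&_&_&_&_&H&_). apply H. Qed.
Lemma dY1' t : Derive (Y1 th') t = exp (Y0 th' t). Proof. destruct Hc' as (_&_&_&_&_&_&_&_&H&_). apply H. Qed.
Lemma dY2' t : Derive (Y2 th') t = A10 th' t * exp (Y0 th' t). Proof. destruct Hc' as (_&_&_&_&_&_&_&_&_&H). apply H. Qed.

Lemma Hu1tt t : Derive (Derive u1) t = A11 th t * Derive u1 t.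
Proof. pose proof (HE t 0) as E0. pose proof (HE t 1) as E1. ring_simplify in E0. ring_simplify in E1. lra. Qed.
Lemma HU00t t : Derive U00 t = - A10 th t * Derive u1 t.
Proof. pose proof (HE t 0) as E0. ring_simplify in E0. lra. Qed.

Definition c1 := Derive u1 0 * exp (- Y0 th 0).
Lemma Hu1t t : Derive u1 t = c1 * exp (Y0 th t).
Proof.
  assert (K : (fun s => Derive u1 s * exp (- Y0 th s)) t = (fun s => Derive u1 s * exp (- Y0 th s)) 0).
  { apply (deriv0_const' (fun s => Derive u1 s * exp (- Y0 th s))).
    - intro s. pose proof (exu1t s). pose proof (exY0 s). auto_derive. auto.
    - intro s. pose proof (exu1t s). pose proof (exY0 s). 
      rewrite (is_derive_unique _ s (Derive (Derive u1) s * exp (- Y0 th s) + Derive u1 s * (- Derive (Y0 th) s * exp (- Y0 th s)))).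
      rewrite Hu1tt, dY0. ring.
      auto_derive. auto. etared. ring. }
  simpl in K. unfold c1. rewrite <- K. rewrite Rmult_assoc, <- exp_plus.
  replace (- Y0 th t + Y0 th t) with 0 by ring. rewrite exp_0. ring.
Qed.

Definition c0 := u1 0 - c1 * Y1 th 0.
Lemma Hu1eq t : u1 t = c1 * Y1 th t + c0.
Proof.
  assert (K : (fun s => u1 s - c1 * Y1 th s) t = (fun s => u1 s - c1 * Y1 th s) 0).
  { apply (deriv0_const' (fun s => u1 s - c1 * Y1 th s)).
    - intro s. pose proof (exu1 s). pose proof (exY1 s). auto_derive. auto.
    - intro s. pose proof (exu1 s). pose proof (exY1 s).
      rewrite (is_derive_unique _ s (Derive u1 s - c1 * Derive (Y1 th) s)).
      rewrite Hu1t, dY1. ring.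
      auto_derive. auto. etared. ring. }
  simpl in K. unfold c0. lra.
Qed.
Definition c2 := U00 0 + c1 * Y2 th 0.
Lemma HU00eq t : U00 t = c2 - c1 * Y2 th t.
Proof.
  assert (K : (fun s => U00 s + c1 * Y2 th s) t = (fun s => U00 s + c1 * Y2 th s) 0).
  { apply (deriv0_const' (fun s => U00 s + c1 * Y2 th s)).
    - intro s. pose proof (exU00 s). pose proof (exY2 s). auto_derive. auto.
    - intro s. pose proof (exU00 s). pose proof (exY2 s).
      rewrite (is_derive_unique _ s (Derive U00 s + c1 * Derive (Y2 th) s)).
      rewrite HU00t, Hu1t, dY2. ring.
      auto_derive. auto. etared. ring. }
  simpl in K. unfold c2. lra.
Qed.

Lemma HK11 t : A11 th' (T t) * (Derive T t * u1 t)
  = A11 th t * u1 t - (Derive (Derive T) t * u1 t + Derive T t * Derive u1 t) / Derive T t - Derive u1 t.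
Proof.
  transitivity ((A11 th' (T t) * (Derive T t * u1 t * 1 + X0 t) + A10 th' (T t))
               - (A11 th' (T t) * (Derive T t * u1 t * 0 + X0 t) + A10 th' (T t))). ring.
  rewrite !HL. field. apply HTt.
Qed.
Lemma HA11 t : A11 th' (T t) = / Derive T t * (A11 th t - Derive (Derive T) t / Derive T t
                   - 2 * Derive u1 t / u1 t).
Proof.
  pose proof (HK11 t) as K. pose proof (HTt t). pose proof (Hu1 t).
  apply (Rmult_eq_reg_r (Derive T t * u1 t)). rewrite K. field. auto.
  apply Rmult_integral_contrapositive_currified; auto.
Qed.
Lemma HA10 t : A10 th' (T t) = u1 t * A10 th t - Derive X0 t / Derive T t + U00 t
                   - X0 t / Derive T t * (A11 th t - Derive (Derive T) t / Derive T t
                   - 2 * Derive u1 t / u1 t).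
Proof.
  pose proof (HL t 0) as K. pose proof (HTt t). pose proof (Hu1 t).
  rewrite HA11 in K. apply (Rplus_eq_reg_l (A11 th' (T t) * X0 t)). rewrite HA11.
  replace (/ Derive T t * (A11 th t - Derive (Derive T) t / Derive T t - 2 * Derive u1 t / u1 t) * X0 t + A10 th' (T t))
    with (/ Derive T t * (A11 th t - Derive (Derive T) t / Derive T t - 2 * Derive u1 t / u1 t) *
     (Derive T t * u1 t * 0 + X0 t) + A10 th' (T t)) by ring.
  rewrite K. field. auto.
Qed.
Lemma HA2' t x : A2 th' (T t) (Derive T t * u1 t * x + X0 t) = u1 t ^ 2 * Derive T t * A2 th t x.
Proof.
  pose proof (HA2 t x) as K. pose proof (HTt t).
  apply (Rmult_eq_reg_r (Derive T t)); auto. rewrite K. ring.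
Qed.

Definition E t := exp (Y0 th' (T t)) * Derive T t * u1 t ^ 2 * exp (- Y0 th t).
Definition dl := E 0.
Lemma HEc t : E t = dl.
Proof.
  unfold dl. apply (deriv0_const' E).
  - intro s. unfold E. pose proof (exY0' (T s)). pose proof (exT s). pose proof (exTt s).
    pose proof (exu1 s). pose proof (exY0 s). auto_derive. repeat split; auto.
  - intro s. unfold E. pose proof (exY0' (T s)). pose proof (exT s). pose proof (exTt s).
    pose proof (exu1 s). pose proof (exY0 s). pose proof (HTt s). pose proof (Hu1 s).
    rewrite (is_derive_unique _ s (Derive T s * Derive (Y0 th') (T s) * exp (Y0 th' (T s)) * Derive T s * u1 s ^ 2 * exp (- Y0 th s)
       + exp (Y0 th' (T s)) * Derive (Derive T) s * u1 s ^ 2 * exp (- Y0 th s)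
       + exp (Y0 th' (T s)) * Derive T s * (2 * u1 s * Derive u1 s) * exp (- Y0 th s)
       + exp (Y0 th' (T s)) * Derive T s * u1 s ^ 2 * (- Derive (Y0 th) s * exp (- Y0 th s)))).
    rewrite dY0', dY0, HA11. field. auto.
    auto_derive. repeat split; auto. etared. ring.
Qed.
Lemma Hexp t : exp (Y0 th' (T t)) = dl * exp (Y0 th t) / (Derive T t * u1 t ^ 2).
Proof.
  pose proof (HEc t) as K. unfold E in K. rewrite exp_Ropp in K. pose proof (HTt t). pose proof (Hu1 t).
  pose proof (exp_pos (Y0 th t)). rewrite <- K. field. repeat split; auto; lra.
Qed.
Lemma Hdpos t : dl * Derive T t > 0.
Proof.
  rewrite <- (HEc t). unfold E. pose proof (HTt t). pose proof (Hu1 t).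
  pose proof (exp_pos (Y0 th' (T t))). pose proof (exp_pos (- Y0 th t)).
  assert (Q : 0 < Rsqr (Derive T t * u1 t)).
  { apply Rsqr_pos_lt. apply Rmult_integral_contrapositive_currified; auto. }
  replace (exp (Y0 th' (T t)) * Derive T t * u1 t ^ 2 * exp (- Y0 th t) * Derive T t)
    with ((exp (Y0 th' (T t)) * exp (- Y0 th t)) * Rsqr (Derive T t * u1 t)) by (unfold Rsqr; ring).
  apply Rmult_lt_0_compat; auto. apply Rmult_lt_0_compat; auto.
Qed.
Lemma HY0 t : Y0 th' (T t) = Y0 th t + ln (dl / (Derive T t * u1 t ^ 2)).
Proof.
  replace (dl / (Derive T t * u1 t ^ 2)) with (exp (Y0 th' (T t) - Y0 th t)).
  rewrite ln_exp. ring.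
  unfold Rminus. rewrite exp_plus, Hexp, exp_Ropp. pose proof (HTt t). pose proof (Hu1 t).
  pose proof (exp_pos (Y0 th t)). field. repeat split; auto; lra.
Qed.

Definition c1' := dl / u1 0 + c1 * Y1 th' (T 0).
Lemma HK2 t : dl / u1 t + c1 * Y1 th' (T t) = c1'.
Proof.
  unfold c1'. apply (deriv0_const' (fun s => dl / u1 s + c1 * Y1 th' (T s))).
  - intro s. pose proof (exY1' (T s)). pose proof (exT s). pose proof (exu1 s). pose proof (Hu1 s).
    auto_derive. repeat split; auto.
  - intro s. pose proof (exY1' (T s)). pose proof (exT s). pose proof (exu1 s). pose proof (HTt s). pose proof (Hu1 s).
    rewrite (is_derive_unique _ s (- dl * Derive u1 s / (u1 s) ^ 2 + c1 * (Derive T s * Derive (Y1 th') (T s)))).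
    rewrite dY1', Hexp, Hu1t. field. auto.
    auto_derive. repeat split; auto. etared. field. auto.
Qed.
Definition c0' := Y1 th' (T 0) * u1 0 - c1' * Y1 th 0.
Lemma HK t : Y1 th' (T t) * u1 t - c1' * Y1 th t = c0'.
Proof.
  unfold c0'. apply (deriv0_const' (fun s => Y1 th' (T s) * u1 s - c1' * Y1 th s)).
  - intro s. pose proof (exY1' (T s)). pose proof (exT s). pose proof (exu1 s). pose proof (exY1 s).
    auto_derive. repeat split; auto.
  - intro s. pose proof (exY1' (T s)). pose proof (exT s). pose proof (exu1 s). pose proof (exY1 s).
    pose proof (HTt s). pose proof (Hu1 s).
    rewrite (is_derive_unique _ s (Derive T s * Derive (Y1 th') (T s) * u1 s + Y1 th' (T s) * Derive u1 s - c1' * Derive (Y1 th) s)).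
    rewrite <- (HK2 s). rewrite dY1', Hexp, Hu1t, dY1. field. auto.
    auto_derive. repeat split; auto. etared. ring.
Qed.
Lemma HY1 t : Y1 th' (T t) = (c1' * Y1 th t + c0') / (c1 * Y1 th t + c0).
Proof.
  rewrite <- Hu1eq. rewrite <- (HK t). pose proof (Hu1 t). field. auto.
Qed.
Lemma Hdel : c1' * c0 - c1 * c0' = dl.
Proof.
  unfold c0', c0. pose proof (HK2 0) as K. pose proof (Hu1 0).
  rewrite <- K. field. auto.
Qed.

Definition R2 t := dl * Y2 th t / u1 t - dl * X0 t * exp (Y0 th t) / (Derive T t * u1 t ^ 2)
   + c2 * ((c1' * Y1 th t + c0') / u1 t).
Definition c3 := Y2 th' (T 0) - R2 0.
Lemma HY2 t : Y2 th' (T t) - R2 t = c3.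
Proof.
  unfold c3. apply (deriv0_const' (fun s => Y2 th' (T s) - R2 s)).
  - intro s. unfold R2. pose proof (exY2' (T s)). pose proof (exT s). pose proof (exTt s). pose proof (exu1 s).
    pose proof (exY2 s). pose proof (exY1 s). pose proof (exY0 s). pose proof (exX0 s).
    pose proof (HTt s). pose proof (Hu1 s).
    auto_derive. repeat split; auto; repeat apply Rmult_integral_contrapositive_currified; auto; apply R1_neq_R0.
  - intro s. unfold R2. pose proof (exY2' (T s)). pose proof (exT s). pose proof (exTt s). pose proof (exu1 s).
    pose proof (exY2 s). pose proof (exY1 s). pose proof (exY0 s). pose proof (exX0 s).
    pose proof (HTt s). pose proof (Hu1 s).
    apply is_derive_unique. auto_derive. repeat split; auto; repeat apply Rmult_integral_contrapositive_currified; auto; try apply R1_neq_R0. etared.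
    rewrite dY2', Hexp, HA10, HU00eq, Hu1t, dY2, dY1, dY0.
    pose proof (Hu1 s) as Hn. rewrite Hu1eq. rewrite Hu1eq in Hn. rewrite <- Hdel. field. auto.
Qed.
End Fin.

Lemma forward_RHS th th' phi T u1 X0 U00 : in_class th -> in_class th' -> Facts th th' phi T u1 X0 U00 ->
     exists (T X0 : R -> R) (c0 c1 c2 c3 c0' c1' : R),
       let delta := c1' * c0 - c1 * c0' in
       let U1 := fun t => c1 * Y1 th t + c0 in
       let U00 := fun t => c2 - c1 * Y2 th t in
       let Tt := Derive T in
       let Ttt := Derive (Derive T) in
       let U1t := Derive U1 in
       smooth1 T /\ smooth1 X0 /\
       (forall t, delta * Tt t > 0) /\
       (forall t x u,
          PT phi t x u = T t /\
          PX phi t x u = Tt t * U1 t * x + X0 t /\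
          PU phi t x u = U1 t * u - U1t t * x + U00 t) /\
       (forall t x,
          A2 th' (T t) (Tt t * U1 t * x + X0 t) = (U1 t) ^ 2 * Tt t * A2 th t x) /\
       (forall t,
          A11 th' (T t) = / Tt t * (A11 th t - Ttt t / Tt t - 2 * U1t t / U1 t) /\
          A10 th' (T t) = U1 t * A10 th t - Derive X0 t / Tt t + U00 t
                          - X0 t / Tt t * (A11 th t - Ttt t / Tt t - 2 * U1t t / U1 t) /\
          Y0 th' (T t) = Y0 th t + ln (delta / (Tt t * (c1 * Y1 th t + c0) ^ 2)) /\
          Y1 th' (T t) = (c1' * Y1 th t + c0') / (c1 * Y1 th t + c0) /\
          Y2 th' (T t) = delta * Y2 th t / (c1 * Y1 th t + c0)
                         - delta * X0 t * exp (Y0 th t) / (Tt t * (c1 * Y1 th t + c0) ^ 2)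
                         + c2 * ((c1' * Y1 th t + c0') / (c1 * Y1 th t + c0)) + c3).
Proof.
  intros Hc Hc' HF.
  exists T, X0, (c0 th u1), (c1 th u1), (c2 th u1 U00), (c3 th th' T u1 X0 U00), (c0' th th' T u1), (c1' th th' T u1).
  cbv beta zeta.
  pose proof (@Hu1eq th th' phi T u1 X0 U00 Hc HF) as Eu.
  assert (EU : (fun t => c1 th u1 * Y1 th t + c0 th u1) = u1).
  { apply functional_extensionality; intro t. symmetry. apply Eu. }
  rewrite EU.
  assert (Eu' : forall t, c1 th u1 * Y1 th t + c0 th u1 = u1 t) by (intro; symmetry; apply Eu).
  pose proof (@HU00eq th th' phi T u1 X0 U00 Hc HF) as EU0.
  assert (EU0' : forall t, c2 th u1 U00 - c1 th u1 * Y2 th t = U00 t) by (intro; symmetry; apply EU0).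
  rewrite (@Hdel th th' phi T u1 X0 U00 Hc Hc' HF).
  pose proof HF as (HsT&Hsu1&HsX0&HsU00&HTt&Hu1&Hphi&_).
  split; [exact HsT|]. split; [exact HsX0|]. split.
  { intro t. exact (@Hdpos th th' phi T u1 X0 U00 Hc Hc' HF t). }
  split.
  { intros t x u. destruct (Hphi t x u) as (E1&E2&E3). rewrite Eu', EU0'. auto. }
  split.
  { intros t x. rewrite Eu'. exact (@HA2' th th' phi T u1 X0 U00 HF t x). }
  intro t. rewrite !Eu', EU0'.
  split; [exact (@HA11 th th' phi T u1 X0 U00 HF t)|].
  split; [exact (@HA10 th th' phi T u1 X0 U00 HF t)|].
  split; [exact (@HY0 th th' phi T u1 X0 U00 Hc Hc' HF t)|].
  split; [rewrite <- (Eu' t); exact (@HY1 th th' phi T u1 X0 U00 Hc Hc' HF t)|].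
  pose proof (@HY2 th th' phi T u1 X0 U00 Hc Hc' HF t) as K. unfold R2 in K.
  rewrite <- K. ring.
Qed.

Theorem corollary12 :
  forall (th : tuple) (phi : ptrans) (th' : tuple),
    admissible th phi th' <->
    (in_class th /\ in_class th' /\
     exists (T X0 : R -> R) (c0 c1 c2 c3 c0' c1' : R),
       let delta := c1' * c0 - c1 * c0' in
       let U1 := fun t => c1 * Y1 th t + c0 in
       let U00 := fun t => c2 - c1 * Y2 th t in
       let Tt := Derive T in
       let Ttt := Derive (Derive T) in
       let U1t := Derive U1 in
       smooth1 T /\ smooth1 X0 /\
       (forall t, delta * Tt t > 0) /\
       (forall t x u,
          PT phi t x u = T t /\
          PX phi t x u = Tt t * U1 t * x + X0 t /\
          PU phi t x u = U1 t * u - U1t t * x + U00 t) /\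
       (forall t x,
          A2 th' (T t) (Tt t * U1 t * x + X0 t) = (U1 t) ^ 2 * Tt t * A2 th t x) /\
       (forall t,
          A11 th' (T t) = / Tt t * (A11 th t - Ttt t / Tt t - 2 * U1t t / U1 t) /\
          A10 th' (T t) = U1 t * A10 th t - Derive X0 t / Tt t + U00 t
                          - X0 t / Tt t * (A11 th t - Ttt t / Tt t - 2 * U1t t / U1 t) /\
          Y0 th' (T t) = Y0 th t + ln (delta / (Tt t * (c1 * Y1 th t + c0) ^ 2)) /\
          Y1 th' (T t) = (c1' * Y1 th t + c0') / (c1 * Y1 th t + c0) /\
          Y2 th' (T t) = delta * Y2 th t / (c1 * Y1 th t + c0)
                         - delta * X0 t * exp (Y0 th t) / (Tt t * (c1 * Y1 th t + c0) ^ 2)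
                         + c2 * ((c1' * Y1 th t + c0') / (c1 * Y1 th t + c0)) + c3)).

Proof.
  intros th phi th'. split.
  - intros (Hc&Hc'&Hp&HM). split; [exact Hc|]. split; [exact Hc'|].
    destruct phi as [f g h].
    apply (forward_RHS th th' _ (T0 f) (u1 h) (X0 g) (U00' h) Hc Hc').
    apply bridge; auto.
  - intros (Hc&Hc'&ex). destruct ex as (T&X0&c0&c1&c2&c3&c0'&c1'&H).
    cbv beta zeta in H.
    destruct H as (HsT&HsX0&Hd&Hphi&HA2&Hr).
    destruct (reverse th phi th' T X0 c0 c1 c2 c3 c0' c1' Hc Hc' HsT HsX0 Hd Hphi HA2
      (fun t => proj1 (Hr t)) (fun t => proj1 (proj2 (Hr t))) (fun t => proj1 (proj2 (proj2 (proj2 (Hr t))))))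
      as [Hp HM].
    split; [exact Hc|]. split; [exact Hc'|]. split; [exact Hp|exact HM].
Qed.
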